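(* Let $\varphi:\mathbb{N}\to\mathbb{C}$ satisfy $|\varphi(m)|\leq 1$ for all $m$. For all real $\alpha\geq 1$, $\beta\geq 0$, $K\geq 0$ and $H\geq 1$, \[ \left|\sum_{0<n\leq K}\varphi\bigl(\lfloor n\alpha+\beta\rfloor\bigr)-\frac 1\alpha\sum_{\beta<m\leq \beta+K\alpha}\varphi(m)\right| \leq \sum_{1\leq |h|\leq H}\min\left\{\frac 1\alpha,\frac 1{|h|}\right\}\left|\sum_{\beta<m\leq\beta+K\alpha}\varphi(m)\,e\!\left(-m\frac h\alpha\right)\right| +\frac 1H\sum_{0\leq|h|\leq H}\left|\sum_{\beta<m\leq\beta+K\alpha}e\!\left(-m\frac h\alpha\right)\right|+O(1), \] where the implied constant is absolute.
   Context: $e(x)=e^{2\pi i x}$; $\lfloor\cdot\rfloor$ is the floor function; $\mathbb{N}$ denotes the nonnegative integers; sums over $n,m,h$ range over integers in the indicated ranges. *)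

(* Defs.v *)
From Stdlib Require Import Reals ZArith List.
From Coquelicot Require Import Coquelicot.
Open Scope R_scope.

(* floor x : the greatest integer <= x (Stdlib's Int_part is exactly floor). *)
Definition floorZ (x : R) : Z := Int_part x.

Definition Zrange (a b : Z) : list Z :=
  map (fun i => (a + Z.of_nat i)%Z) (seq 0 (Z.to_nat (b - a + 1))).

Definition sumC (a b : Z) (f : Z -> C) : C :=
  fold_right (fun k acc => Cplus (f k) acc) (RtoC 0) (Zrange a b).

Definition sumR (a b : Z) (f : Z -> R) : R :=
  fold_right (fun k acc => f k + acc) 0 (Zrange a b).

Definition e (x : R) : C := (cos (2 * PI * x), sin (2 * PI * x)).

(* Main.v *)
Require Import Defs.
From Stdlib Require Import Reals ZArith List Lra Lia Classical.
From Coquelicot Require Import Coquelicot.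
Open Scope R_scope.

Fixpoint rs (n : nat) (f : nat -> R) : R :=
  match n with O => 0 | S n' => rs n' f + f n' end.

Lemma rs_ext n f g : (forall k, (k < n)%nat -> f k = g k) -> rs n f = rs n g.
Proof. induction n; simpl; intros H; auto. rewrite IHn; [rewrite H|]; auto; intros; apply H; lia. Qed.
Lemma rs_plus n f g : rs n (fun k => f k + g k) = rs n f + rs n g.
Proof. induction n; simpl; [lra|rewrite IHn; lra]. Qed.
Lemma rs_minus n f g : rs n (fun k => f k - g k) = rs n f - rs n g.
Proof. induction n; simpl; [lra|rewrite IHn; lra]. Qed.
Lemma rs_scal n c f : rs n (fun k => c * f k) = c * rs n f.
Proof. induction n; simpl; [lra|rewrite IHn; lra]. Qed.
Lemma rs_le n f g : (forall k, (k < n)%nat -> f k <= g k) -> rs n f <= rs n g.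
Proof. induction n; simpl; intros H; [lra|]. assert (f n <= g n) by (apply H; lia).
 assert (rs n f <= rs n g) by (apply IHn; intros; apply H; lia). lra. Qed.
Lemma rs_shift n f : rs (S n) f = f O + rs n (fun k => f (S k)).
Proof. induction n; simpl in *; [lra|]. rewrite IHn; lra. Qed.
Lemma rs_tele n g : rs n (fun k => g k - g (S k)) = g O - g n.
Proof. induction n; simpl; [lra|rewrite IHn; lra]. Qed.
Lemma rs_zero n : rs n (fun _ => 0) = 0.
Proof. induction n; simpl; [lra|rewrite IHn; lra]. Qed.
Lemma rs_single n j f : (j < n)%nat -> (forall k, (k < n)%nat -> k <> j -> f k = 0) -> rs n f = f j.
Proof. induction n; intros Hj H; [lia|simpl]. destruct (Nat.eq_dec j n).
 - subst. rewrite (rs_ext n f (fun _ => 0)). rewrite rs_zero; lra. intros; apply H; lia.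
 - rewrite IHn; [|lia|intros; apply H; lia]. rewrite (H n); [lra|lia|auto]. Qed.
Lemma rs_swap n m (f : nat -> nat -> R) : rs n (fun i => rs m (fun j => f i j)) = rs m (fun j => rs n (fun i => f i j)).
Proof. induction n; simpl. rewrite rs_zero; auto. rewrite IHn, <- rs_plus. auto. Qed.
Lemma rs_abs n f : Rabs (rs n f) <= rs n (fun k => Rabs (f k)).
Proof. induction n; simpl. rewrite Rabs_R0; lra. eapply Rle_trans; [apply Rabs_triang|lra]. Qed.
Lemma rs_const n c : rs n (fun _ => c) = INR n * c.
Proof. induction n; simpl rs; [simpl; lra|rewrite IHn, S_INR; lra]. Qed.
Lemma rs_id n : rs n (fun k => INR k) = INR n * (INR n - 1) / 2.
Proof. induction n; simpl rs; [simpl; lra|rewrite IHn, S_INR; lra]. Qed.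

Lemma rs_S n f : rs (S n) f = rs n f + f n.
Proof. reflexivity. Qed.
Lemma trig_step (n : nat) (t : R) :
  cos (INR (S n) * t) = cos (INR n * t) * cos t - sin (INR n * t) * sin t /\
  sin (INR (S n) * t) = sin (INR n * t) * cos t + cos (INR n * t) * sin t.
Proof. rewrite S_INR. replace ((INR n + 1) * t) with (INR n * t + t) by ring.
 rewrite cos_plus, sin_plus. split; ring. Qed.

Lemma trig_back (n : nat) (t : R) :
  cos (INR n * t) = cos (INR (S n) * t) * cos t + sin (INR (S n) * t) * sin t /\
  sin (INR n * t) = sin (INR (S n) * t) * cos t - cos (INR (S n) * t) * sin t.
Proof. rewrite S_INR. replace (INR n * t) with ((INR n + 1) * t - t) by ring.
 rewrite cos_minus, sin_minus. split; ring_simplify; auto. Qed.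

Ltac trig_ind n t IHn :=
  rewrite (rs_S (S n)), Rmult_plus_distr_l, IHn;
  destruct (trig_step (S n) t) as [A B]; destruct (trig_back n t) as [C D];
  rewrite ?A, ?B, ?C, ?D; rewrite ?S_INR; ring.

Lemma sum_cos n t : 2 * (1 - cos t) * rs (S n) (fun k => cos (INR k * t))
  = 1 - cos t + cos (INR n * t) - cos (INR (S n) * t).
Proof. induction n.
 - cbn [rs INR]. replace (1 * t) with t by ring. replace (0 * t) with 0 by ring. rewrite cos_0. ring.
 - trig_ind n t IHn. Qed.
Lemma sum_sin n t : 2 * (1 - cos t) * rs (S n) (fun k => sin (INR k * t))
  = sin t + sin (INR n * t) - sin (INR (S n) * t).
Proof. induction n.
 - cbn [rs INR]. replace (1 * t) with t by ring. replace (0 * t) with 0 by ring. rewrite sin_0. ring.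
 - trig_ind n t IHn. Qed.
Lemma sum_kcos n t : 2 * (1 - cos t) * rs (S n) (fun k => INR k * cos (INR k * t))
  = (INR n + 1) * cos (INR n * t) - INR n * cos (INR (S n) * t) - 1.
Proof. induction n.
 - cbn [rs INR]. replace (1 * t) with t by ring. replace (0 * t) with 0 by ring. rewrite cos_0. simpl; ring.
 - trig_ind n t IHn. Qed.
Lemma sum_ksin n t : 2 * (1 - cos t) * rs (S n) (fun k => INR k * sin (INR k * t))
  = (INR n + 1) * sin (INR n * t) - INR n * sin (INR (S n) * t).
Proof. induction n.
 - cbn [rs INR]. replace (1 * t) with t by ring. replace (0 * t) with 0 by ring. rewrite sin_0. simpl; ring.
 - trig_ind n t IHn. Qed.

Lemma cos_2kpi (h : nat) : cos (2 * INR h * PI) = 1.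
Proof. replace (2 * INR h * PI) with (0 + 2 * INR h * PI) by ring. rewrite cos_period. apply cos_0. Qed.
Lemma sin_2kpi (h : nat) : sin (2 * INR h * PI) = 0.
Proof. replace (2 * INR h * PI) with (0 + 2 * INR h * PI) by ring. rewrite sin_period. apply sin_0. Qed.
Lemma sin_minus_2kpi x (k : nat) : sin (x - 2 * INR k * PI) = sin x.
Proof. rewrite <- (sin_period (x - 2 * INR k * PI) k). f_equal; ring. Qed.
Lemma cos_minus_2kpi x (k : nat) : cos (x - 2 * INR k * PI) = cos x.
Proof. rewrite <- (cos_period (x - 2 * INR k * PI) k). f_equal; ring. Qed.

Section Spec.
Variable M h : nat.
Hypothesis Hh1 : (1 <= h)%nat.
Hypothesis HhM : (h <= M)%nat.
Let L := INR (S M).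
Let u := PI * INR h / L.

Lemma L_pos : 0 < L.
Proof. unfold L; apply lt_0_INR; lia. Qed.

Lemma u_range : 0 < u < PI.
Proof. unfold u. assert (0 < INR h) by (apply lt_0_INR; lia). assert (INR h < L) by (unfold L; apply lt_INR; lia).
 pose proof PI_RGT_0. pose proof L_pos. split. apply Rdiv_lt_0_compat; nra.
 apply Rmult_lt_reg_r with L; auto. unfold Rdiv. rewrite Rmult_assoc, Rinv_l; nra. Qed.

Lemma sin_u_pos : 0 < sin u.
Proof. destruct u_range; apply sin_gt_0; auto. Qed.

Lemma one_minus_cos : 1 - cos (2 * u) = 2 * sin u * sin u.
Proof. rewrite cos_2a_sin; ring. Qed.

Lemma Mth_cos : cos (INR M * (2 * u)) = cos (2 * u).
Proof. replace (INR M * (2*u)) with (- (2 * u) + 2 * INR h * PI).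
 rewrite cos_period, cos_neg; auto. unfold u, L. rewrite S_INR. field. pose proof (pos_INR M); lra. Qed.
Lemma Mth_sin : sin (INR M * (2 * u)) = - sin (2 * u).
Proof. replace (INR M * (2*u)) with (- (2 * u) + 2 * INR h * PI).
 rewrite sin_period, sin_neg; auto. unfold u, L. rewrite S_INR. field. pose proof (pos_INR M); lra. Qed.
Lemma Lth_cos : cos (INR (S M) * (2 * u)) = 1.
Proof. replace (INR (S M) * (2*u)) with (2 * INR h * PI). apply cos_2kpi. unfold u, L. field. pose proof (pos_INR M); rewrite S_INR; lra. Qed.
Lemma Lth_sin : sin (INR (S M) * (2 * u)) = 0.
Proof. replace (INR (S M) * (2*u)) with (2 * INR h * PI). apply sin_2kpi. unfold u, L. field. pose proof (pos_INR M); rewrite S_INR; lra. Qed.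

Lemma T_cos : rs (S M) (fun k => cos (INR k * (2 * u))) = 0.
Proof. pose proof (sum_cos M (2*u)). rewrite Mth_cos, Lth_cos, cos_2a_sin in H.
 pose proof sin_u_pos. assert (4 * (sin u * sin u) <> 0) by (apply Rgt_not_eq; pose proof (Rmult_lt_0_compat _ _ H0 H0); lra).
 apply (Rmult_eq_reg_l (4 * (sin u * sin u))); auto. set (X := rs _ _) in *. nra. Qed.
Lemma T_sin : rs (S M) (fun k => sin (INR k * (2 * u))) = 0.
Proof. pose proof (sum_sin M (2*u)). rewrite Mth_sin, Lth_sin, cos_2a_sin in H.
 pose proof sin_u_pos. assert (4 * (sin u * sin u) <> 0) by (apply Rgt_not_eq; pose proof (Rmult_lt_0_compat _ _ H0 H0); lra).
 apply (Rmult_eq_reg_l (4 * (sin u * sin u))); auto. set (X := rs _ _) in *. nra. Qed.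
Lemma T_kcos : rs (S M) (fun k => INR k * cos (INR k * (2 * u))) = - L / 2.
Proof. pose proof (sum_kcos M (2*u)). rewrite Mth_cos, Lth_cos in H. rewrite one_minus_cos in H.
 pose proof sin_u_pos. assert (4 * (sin u * sin u) <> 0) by (apply Rgt_not_eq; pose proof (Rmult_lt_0_compat _ _ H0 H0); lra).
 apply (Rmult_eq_reg_l (4 * (sin u * sin u))); auto. 
 replace (INR M + 1) with L in H by (unfold L; rewrite S_INR; auto).
 rewrite cos_2a_sin in H. replace (INR M) with (L - 1) in H by (unfold L; rewrite S_INR; ring). set (X := rs _ _) in *. nra. Qed.
Lemma T_ksin : rs (S M) (fun k => INR k * sin (INR k * (2 * u))) = - (L / 2) * (cos u / sin u).
Proof. pose proof (sum_ksin M (2*u)). rewrite Mth_sin, Lth_sin in H. rewrite one_minus_cos in H.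
 pose proof sin_u_pos. 
 replace (INR M + 1) with L in H by (unfold L; rewrite S_INR; auto).
 rewrite sin_2a in H. apply (Rmult_eq_reg_l (4 * (sin u * sin u))); [|nra].
 field_simplify; [|lra]. field_simplify in H. nra. Qed.
End Spec.

Lemma rs_scal_in n (f g : nat -> R) c : rs n (fun i => f i * (c * g i)) = c * rs n (fun i => f i * g i).
Proof. rewrite <- rs_scal. apply rs_ext; intros; ring. Qed.

Section DefsS.
Variable M : nat.
Definition LL := INR (S M).
Definition Fk (z : R) := / LL * (1 + 2 * rs M (fun i => (1 - INR (S i) / LL) * cos (2 * PI * INR (S i) * z))).
Definition Gk (z : R) := / (PI * LL ^ 2) * (rs M (fun i => sin (2 * PI * INR (S i) * z)) + / 2 * sin (2 * PI * LL * z)).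
Definition cc (hr : R) := / LL * ((1 - hr / LL) * (cos (PI * hr / LL) / sin (PI * hr / LL)) + / PI).
Definition Vf (x : R) := - rs M (fun i => cc (INR (S i)) * sin (2 * PI * INR (S i) * x)).
Definition Kf (x : R) := Fk x / 2.

Lemma LL_pos : 0 < LL.
Proof. unfold LL; apply lt_0_INR; lia. Qed.
Lemma LL_eq : LL = INR M + 1.
Proof. unfold LL; rewrite S_INR; auto. Qed.

Lemma arg_shift (h : nat) y k : 2 * PI * INR h * (y - INR k / LL) = 2 * PI * INR h * y - INR k * (2 * (PI * INR h / INR (S M))).
Proof. unfold LL. field. apply Rgt_not_eq, lt_0_INR; lia. Qed.

Lemma S1 i y : (i < M)%nat ->
  rs (S M) (fun k => (INR k / LL - / 2) * cos (2 * PI * INR (S i) * (y - INR k / LL)))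
  = - / 2 * cos (2 * PI * INR (S i) * y) - / 2 * (cos (PI * INR (S i) / LL) / sin (PI * INR (S i) / LL)) * sin (2 * PI * INR (S i) * y).
Proof. intros Hi. set (a := 2 * PI * INR (S i) * y). set (t := 2 * (PI * INR (S i) / INR (S M))).
 rewrite (rs_ext _ _ (fun k => / LL * (cos a * (INR k * cos (INR k * t))) + / LL * (sin a * (INR k * sin (INR k * t)))
    + (- / 2 * cos a) * cos (INR k * t) + (- / 2 * sin a) * sin (INR k * t))).
 2:{ intros k _. rewrite arg_shift. fold a t. rewrite cos_minus. field. pose proof LL_pos; lra. }
 rewrite !rs_plus, !rs_scal. unfold t. 
 rewrite (T_kcos M (S i)), (T_ksin M (S i)), (T_cos M (S i)), (T_sin M (S i)) by lia.
 fold LL. field. split; [|pose proof LL_pos; lra].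
 apply Rgt_not_eq, (sin_u_pos M (S i)); lia. Qed.

Lemma S2 i y : (i < M)%nat -> rs (S M) (fun k => sin (2 * PI * INR (S i) * (y - INR k / LL))) = 0.
Proof. intros Hi. set (a := 2 * PI * INR (S i) * y). set (t := 2 * (PI * INR (S i) / INR (S M))).
 rewrite (rs_ext _ _ (fun k => sin a * cos (INR k * t) + (- cos a) * sin (INR k * t))).
 2:{ intros k _. rewrite arg_shift. fold a t. rewrite sin_minus. ring. }
 rewrite rs_plus, !rs_scal. unfold t. rewrite (T_cos M (S i)), (T_sin M (S i)) by lia. ring. Qed.

Lemma S5 i y : (i < M)%nat -> rs (S M) (fun k => cos (2 * PI * INR (S i) * (y - INR k / LL))) = 0.
Proof. intros Hi. set (a := 2 * PI * INR (S i) * y). set (t := 2 * (PI * INR (S i) / INR (S M))).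
 rewrite (rs_ext _ _ (fun k => cos a * cos (INR k * t) + (sin a) * sin (INR k * t))).
 2:{ intros k _. rewrite arg_shift. fold a t. rewrite cos_minus. ring. }
 rewrite rs_plus, !rs_scal. unfold t. rewrite (T_cos M (S i)), (T_sin M (S i)) by lia. ring. Qed.

Lemma S3 y : rs (S M) (fun k => sin (2 * PI * LL * (y - INR k / LL))) = LL * sin (2 * PI * LL * y).
Proof. rewrite (rs_ext _ _ (fun _ => sin (2 * PI * LL * y))). rewrite rs_const; auto.
 intros k _. replace (2 * PI * LL * (y - INR k / LL)) with (2 * PI * LL * y - 2 * INR k * PI).
 apply sin_minus_2kpi. field. pose proof LL_pos; lra. Qed.

Lemma S4 : rs (S M) (fun k => INR k / LL - / 2) = - / 2.
Proof. rewrite rs_minus. unfold Rdiv. rewrite (rs_ext _ _ (fun k => / LL * INR k)) by (intros; ring).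
 rewrite rs_scal, rs_id, rs_const. unfold LL; rewrite S_INR. field. pose proof (pos_INR M); lra. Qed.

Lemma partition y : rs (S M) (fun k => Fk (y - INR k / LL)) = 1.
Proof. unfold Fk. rewrite rs_scal.
 rewrite rs_plus, rs_const, rs_scal, rs_swap.
 rewrite (rs_ext M _ (fun _ => 0)). rewrite rs_zero. fold LL. field. pose proof LL_pos; lra.
 intros i Hi. rewrite rs_scal, S5; auto; ring. Qed.

Lemma identity_I y : Vf y = rs (S M) (fun k => (INR k / LL - / 2) * Fk (y - INR k / LL)) + / 2 * Fk y
   + rs (S M) (fun k => Gk (y - INR k / LL)) - LL * Gk y.
Proof.
 assert (R1 : rs (S M) (fun k => (INR k / LL - / 2) * Fk (y - INR k / LL)) =
   / LL * (- / 2) + 2 / LL * rs M (fun i => (1 - INR (S i) / LL) * (- / 2 * cos (2 * PI * INR (S i) * y) - / 2 * (cos (PI * INR (S i) / LL) / sin (PI * INR (S i) / LL)) * sin (2 * PI * INR (S i) * y)))).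
 { unfold Fk. rewrite (rs_ext _ _ (fun k => / LL * (INR k / LL - / 2) + 2 / LL * rs M (fun i => (1 - INR (S i) / LL) * ((INR k / LL - / 2) * cos (2 * PI * INR (S i) * (y - INR k / LL)))))).
   2:{ intros k _. rewrite rs_scal_in. unfold Rdiv; ring. }
   rewrite rs_plus, !rs_scal, S4, rs_swap. f_equal. f_equal. apply rs_ext. intros i Hi.
   rewrite rs_scal, S1; auto. }
 assert (R2 : rs (S M) (fun k => Gk (y - INR k / LL)) = / (PI * LL ^ 2) * (/ 2 * (LL * sin (2 * PI * LL * y)))).
 { unfold Gk. rewrite rs_scal, rs_plus, rs_swap, rs_scal, S3. rewrite (rs_ext M _ (fun _ => 0)). rewrite rs_zero. ring.
   intros i Hi; apply S2; auto. }
 rewrite R1, R2. unfold Vf, Gk, Fk.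
 set (w := fun i : nat => 1 - INR (S i) / LL).
 set (cs := fun i : nat => cos (2 * PI * INR (S i) * y)).
 set (sn := fun i : nat => sin (2 * PI * INR (S i) * y)).
 set (ct := fun i : nat => cos (PI * INR (S i) / LL) / sin (PI * INR (S i) / LL)).
 change (rs M (fun i => (1 - INR (S i) / LL) * cos (2 * PI * INR (S i) * y))) with (rs M (fun i => w i * cs i)).
 change (rs M (fun i => (1 - INR (S i) / LL) * (- / 2 * cos (2 * PI * INR (S i) * y) - / 2 * (cos (PI * INR (S i) / LL) / sin (PI * INR (S i) / LL)) * sin (2 * PI * INR (S i) * y))))
   with (rs M (fun i => w i * (- / 2 * cs i - / 2 * ct i * sn i))).
 change (rs M (fun i => sin (2 * PI * INR (S i) * y))) with (rs M sn).
 rewrite (rs_ext M (fun i => cc (INR (S i)) * sin (2 * PI * INR (S i) * y))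
   (fun i => (/ LL) * (w i * ct i * sn i) + (/ LL / PI) * sn i)).
 2:{ intros i Hi. unfold cc, w, ct, sn. field. pose proof LL_pos. repeat split; try apply PI_neq0; try lra.
      apply Rgt_not_eq, (sin_u_pos M (S i)); lia. }
 rewrite (rs_ext M (fun i => w i * (- / 2 * cs i - / 2 * ct i * sn i)) (fun i => (- / 2) * (w i * cs i) + (- / 2) * (w i * ct i * sn i))) by (intros; ring).
 rewrite !rs_plus, !rs_scal.
 change (rs M (fun i => sn i)) with (rs M sn).
 field. pose proof LL_pos. repeat split; try apply PI_neq0; try lra.
Qed.

End DefsS.

Lemma dirichlet n a : sin a * (1 + 2 * rs n (fun i => cos (2 * INR (S i) * a))) = sin ((2 * INR n + 1) * a).
Proof. induction n.
 - simpl. replace ((2*0+1)*a) with a by ring. ring.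
 - rewrite rs_S. set (Rsm := rs n _) in *.
   replace (sin a * (1 + 2 * (Rsm + cos (2 * INR (S n) * a)))) with (sin a * (1 + 2 * Rsm) + 2 * sin a * cos (2 * INR (S n) * a)) by ring.
   rewrite IHn.
   rewrite !S_INR. set (x := (2 * INR n + 2) * a).
   replace ((2 * INR n + 1) * a) with (x - a) by (unfold x; ring).
   replace ((2 * (INR n + 1) + 1) * a) with (x + a) by (unfold x; ring).
   replace (2 * (INR n + 1) * a) with x by (unfold x; ring).
   rewrite sin_plus, sin_minus. ring. Qed.

Definition cF (n : nat) (a : R) := INR n + 2 * rs n (fun i => (INR n - INR (S i)) * cos (2 * INR (S i) * a)).

Lemma fejer_gen n a : sin a ^ 2 * cF n a = sin (INR n * a) ^ 2.
Proof. induction n.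
 - unfold cF. simpl. rewrite Rmult_0_l, sin_0. ring.
 - assert (E : cF (S n) a = cF n a + (1 + 2 * rs n (fun i => cos (2 * INR (S i) * a)))).
   { unfold cF. rewrite rs_S. replace (INR (S n) - INR (S n)) with 0 by ring.
     rewrite (rs_ext n _ (fun i => (INR n - INR (S i)) * cos (2 * INR (S i) * a) + cos (2 * INR (S i) * a))).
     rewrite rs_plus. rewrite S_INR. ring. intros; rewrite S_INR; ring. }
   rewrite E, Rmult_plus_distr_l, IHn.
   replace (sin a ^ 2 * (1 + 2 * rs n (fun i : nat => cos (2 * INR (S i) * a)))) with (sin a * sin ((2 * INR n + 1) * a)) by (rewrite <- dirichlet; ring).
   rewrite S_INR. set (x := INR n * a).
   replace ((2 * INR n + 1) * a) with (2 * x + a) by (unfold x; ring).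
   replace ((INR n + 1) * a) with (x + a) by (unfold x; ring).
   rewrite sin_plus, sin_plus, sin_2a, cos_2a. pose proof (sin2_cos2 a). unfold Rsqr in H.
   replace (sin x ^ 2) with (sin x ^ 2 * (sin a * sin a + cos a * cos a)) at 1 by (rewrite H; ring). ring. Qed.

Lemma gid_gen n a : sin a * (rs n (fun i => sin (2 * INR (S i) * a)) + / 2 * sin (2 * INR (S n) * a)) = cos a * sin (INR (S n) * a) ^ 2.
Proof. induction n.
 - simpl. replace (2 * 1 * a) with (2 * a) by ring. replace (1 * a) with a by ring. rewrite sin_2a. field.
 - rewrite rs_S. set (Rsm := rs n _) in *.
   replace (sin a * (Rsm + sin (2 * INR (S n) * a) + / 2 * sin (2 * INR (S (S n)) * a)))
     with (sin a * (Rsm + / 2 * sin (2 * INR (S n) * a)) + sin a * (/ 2 * sin (2 * INR (S n) * a) + / 2 * sin (2 * INR (S (S n)) * a))) by field.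
   rewrite IHn. set (A := INR (S n) * a). set (B := INR (S (S n)) * a).
   replace (2 * INR (S n) * a) with (A + A) by (unfold A; ring).
   replace (2 * INR (S (S n)) * a) with (B + B) by (unfold B; ring).
   assert (Ea : a = B - A) by (unfold A, B; rewrite !S_INR; ring).
   rewrite (f_equal sin Ea), (f_equal cos Ea). clearbody A B. clear IHn.
   pose proof (sin2_cos2 A). pose proof (sin2_cos2 B). unfold Rsqr in *.
   rewrite !sin_plus, !sin_minus, !cos_minus.
   replace (sin B ^ 2) with (sin B ^ 2 * (sin A * sin A + cos A * cos A)) by (rewrite H; ring).
   replace (sin A ^ 2) with (sin A ^ 2 * (sin B * sin B + cos B * cos B)) by (rewrite H0; ring).
   replace (/ 2 * (sin A * cos A + cos A * sin A) + / 2 * (sin B * cos B + cos B * sin B))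
     with (sin A * cos A * (sin B * sin B + cos B * cos B) + sin B * cos B * (sin A * sin A + cos A * cos A)) by (rewrite H, H0; field).
   ring. Qed.

Section S.
Variable M : nat.
Let L := LL M.

Lemma fejer z : L ^ 2 * sin (PI * z) ^ 2 * Fk M z = sin (PI * L * z) ^ 2.
Proof. assert (E : L ^ 2 * Fk M z = cF (S M) (PI * z)).
 { unfold Fk, cF. fold L. rewrite rs_S. replace (INR (S M) - INR (S M)) with 0 by ring.
   rewrite Rmult_0_l, Rplus_0_r. 
   rewrite (rs_ext M (fun i => (INR (S M) - INR (S i)) * cos (2 * INR (S i) * (PI * z)))
      (fun i => L * ((1 - INR (S i) / L) * cos (2 * PI * INR (S i) * z)))).
   rewrite rs_scal. unfold L, LL. field. apply Rgt_not_eq, lt_0_INR; lia.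
   intros i _. unfold L, LL. replace (2 * INR (S i) * (PI * z)) with (2 * PI * INR (S i) * z) by ring. field. apply Rgt_not_eq, lt_0_INR; lia. }
 replace (L ^ 2 * sin (PI * z) ^ 2 * Fk M z) with (sin (PI * z) ^ 2 * (L ^ 2 * Fk M z)) by ring.
 rewrite E, fejer_gen. replace (INR (S M) * (PI * z)) with (PI * L * z) by (unfold L, LL; ring). reflexivity. Qed.

Lemma gid z : PI * L ^ 2 * sin (PI * z) * Gk M z = cos (PI * z) * sin (PI * L * z) ^ 2.
Proof. unfold Gk. fold L. 
 replace (PI * L ^ 2 * sin (PI * z) * (/ (PI * L ^ 2) * (rs M (fun i : nat => sin (2 * PI * INR (S i) * z)) + / 2 * sin (2 * PI * L * z))))
  with (sin (PI * z) * (rs M (fun i : nat => sin (2 * INR (S i) * (PI * z))) + / 2 * sin (2 * INR (S M) * (PI * z)))).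
 rewrite gid_gen. replace (INR (S M) * (PI * z)) with (PI * L * z) by (unfold L, LL; ring). reflexivity.
 rewrite (rs_ext M (fun i : nat => sin (2 * INR (S i) * (PI * z))) (fun i => sin (2 * PI * INR (S i) * z))) by (intros; f_equal; ring).
 replace (2 * INR (S M) * (PI * z)) with (2 * PI * L * z) by (unfold L, LL; ring).
 field. split. apply Rgt_not_eq, LL_pos. apply PI_neq0. Qed.

Lemma sin2_shift x (k : nat) : sin (x - INR k * PI) ^ 2 = sin x ^ 2.
Proof. induction k.
 - replace (x - INR 0 * PI) with x by (simpl; ring). reflexivity.
 - rewrite S_INR. replace (x - (INR k + 1) * PI) with ((x - INR k * PI) - PI) by ring.
 rewrite sin_minus, sin_PI, cos_PI. rewrite <- IHk. ring. Qed.

Lemma Fk_closed z : sin (PI * z) <> 0 -> Fk M z = sin (PI * L * z) ^ 2 / (L ^ 2 * sin (PI * z) ^ 2).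
Proof. intros H. rewrite <- fejer. field. split; auto. apply Rgt_not_eq, LL_pos. Qed.
Lemma Gk_closed z : sin (PI * z) <> 0 -> Gk M z = cos (PI * z) * sin (PI * L * z) ^ 2 / (PI * L ^ 2 * sin (PI * z)).
Proof. intros H. rewrite <- gid. field. repeat split; auto. apply Rgt_not_eq, LL_pos. apply PI_neq0. Qed.

Lemma Fk_0 : Fk M 0 = 1.
Proof. unfold Fk. rewrite (rs_ext M _ (fun i => 1 - / L * INR (S i))).
 rewrite rs_minus, rs_const, rs_scal. rewrite (rs_ext M _ (fun i => INR i + 1)) by (intros; apply S_INR).
 rewrite rs_plus, rs_id, rs_const. fold L. unfold L, LL. rewrite S_INR. field. pose proof (pos_INR M); lra.
 intros i _. rewrite Rmult_0_r, cos_0. fold L. unfold Rdiv. ring. Qed.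
Lemma Gk_0 : Gk M 0 = 0.
Proof. unfold Gk. rewrite (rs_ext M _ (fun _ => 0)). rewrite rs_zero, Rmult_0_r, sin_0. ring.
 intros; rewrite Rmult_0_r; apply sin_0. Qed.
Lemma Vf_0 : Vf M 0 = 0.
Proof. unfold Vf. rewrite (rs_ext M _ (fun _ => 0)). rewrite rs_zero. ring.
 intros; rewrite Rmult_0_r, sin_0; ring. Qed.
End S.

Definition phi (z : R) := cos (PI * z) / (PI * sin (PI * z)) - z / sin (PI * z) ^ 2.
Definition Aa (z : R) := z * cos (PI * z) / (PI * sin (PI * z)).

Lemma cont_of_derive (f : R -> R) (df x : R) : is_derive f x df -> continuity_pt f x.
Proof. intros H. apply is_derive_Reals in H. apply derivable_continuous_pt. exists df. auto. Qed.

Lemma ucos u : 0 <= u <= PI -> u * cos u <= sin u.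
Proof. intros [H1 H2].
 destruct (MVT_gen (fun t => sin t - t * cos t) 0 u (fun t => t * sin t)) as [c [Hc E]].
 - intros; auto_derive; auto; ring.
 - intros; apply (cont_of_derive _ (x * sin x)); auto_derive; auto; ring.
 - rewrite Rmin_left in Hc by lra. rewrite Rmax_right in Hc by lra.
   rewrite sin_0, Rmult_0_l in E. assert (0 <= sin c) by (apply sin_ge_0; lra).
   assert (0 <= c * sin c * (u - 0)) by (apply Rmult_le_pos; [apply Rmult_le_pos|]; lra). lra. Qed.

Lemma ucot u : -PI < u < PI -> sin u <> 0 -> (u * cos u - sin u) * sin u <= 0.
Proof. intros Hu Hs. destruct (Rle_lt_dec 0 u).
 - assert (u * cos u <= sin u) by (apply ucos; lra).
   assert (0 <= sin u) by (apply sin_ge_0; lra).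
   assert (0 <= sin u - u * cos u) by lra. pose proof (Rmult_le_pos _ _ H1 H0). lra.
 - assert ((- u) * cos (- u) <= sin (- u)) by (apply ucos; lra).
   rewrite cos_neg, sin_neg in H. assert (0 <= sin (- u)) by (apply sin_ge_0; lra). rewrite sin_neg in H0.
   assert (0 <= u * cos u - sin u) by lra. pose proof (Rmult_le_pos _ _ H1 H0). lra. Qed.

Lemma sin_sq_le x : sin x ^ 2 <= x ^ 2.
Proof. assert (forall t, 0 < t -> - t < sin t < t).
 { intros t Ht. split; [|apply sin_lt_x; auto]. pose proof (SIN_bound t).
   destruct (Rle_lt_dec t 1). 2: lra. assert (0 < sin t) by (apply sin_gt_0; pose proof PI_RGT_0; pose proof PI2_3_2; lra). lra. }
 destruct (Rtotal_order x 0) as [Hx|[Hx|Hx]].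
 - specialize (H (- x)). rewrite sin_neg in H. destruct H; nra.
 - subst. rewrite sin_0. lra.
 - specialize (H x Hx). nra. Qed.

Lemma sin_le_id x : 0 <= x -> sin x <= x.
Proof. intros. destruct (Req_dec x 0). subst; rewrite sin_0; lra. left; apply sin_lt_x; lra. Qed.

Lemma sinPI_ne z : -1 < z < 1 -> z <> 0 -> sin (PI * z) <> 0.
Proof. intros Hz Hz0 E. apply sin_eq_0_0 in E. destruct E as [k Hk].
 pose proof PI_RGT_0. assert (z = IZR k) by (apply (Rmult_eq_reg_r PI); nra).
 subst. assert (-1 < k < 1)%Z by (split; apply lt_IZR; lra). assert (k = 0%Z) by lia. subst; auto. Qed.

Lemma phi_derive z : sin (PI * z) <> 0 -> is_derive phi z (2 * (PI * z * cos (PI * z) - sin (PI * z)) / sin (PI * z) ^ 3).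
Proof. intros H. pose proof PI_neq0.
 replace (2 * (PI * z * cos (PI * z) - sin (PI * z)) / sin (PI * z) ^ 3) with
   (2 * (PI * z * cos (PI * z) - sin (PI * z)) / sin (PI * z) ^ 3 + (1 - (sin (PI * z) ^ 2 + cos (PI * z) ^ 2)) / sin (PI * z) ^ 2).
 2:{ pose proof (sin2_cos2 (PI * z)). unfold Rsqr in H1. replace (sin (PI * z) ^ 2 + cos (PI * z) ^ 2) with 1 by (rewrite <- H1; ring). field; auto. }
 unfold phi. auto_derive.
 - repeat split; auto; apply Rmult_integral_contrapositive; split; auto; lra.
 - field. auto. Qed.

Lemma Aa_derive z : sin (PI * z) <> 0 -> is_derive Aa z (phi z).
Proof. intros H. pose proof PI_neq0.
 replace (phi z) with (phi z + z * (1 - (sin (PI * z) ^ 2 + cos (PI * z) ^ 2)) / sin (PI * z) ^ 2).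
 2:{ pose proof (sin2_cos2 (PI * z)). unfold Rsqr in H1. replace (sin (PI * z) ^ 2 + cos (PI * z) ^ 2) with 1 by (rewrite <- H1; ring). field; auto. }
 unfold Aa, phi. auto_derive.
 - repeat split; auto; apply Rmult_integral_contrapositive; split; auto.
 - field. auto. Qed.

Lemma phi_deriv_nonpos z : -1 < z < 1 -> z <> 0 -> 2 * (PI * z * cos (PI * z) - sin (PI * z)) / sin (PI * z) ^ 3 <= 0.
Proof. intros Hz Hz0. pose proof (sinPI_ne z Hz Hz0) as Hs. pose proof PI_RGT_0.
 assert (-PI < PI * z < PI) by nra.
 pose proof (ucot (PI * z) H0 Hs).
 replace (2 * (PI * z * cos (PI * z) - sin (PI * z)) / sin (PI * z) ^ 3) with
   (2 * ((PI * z * cos (PI * z) - sin (PI * z)) * sin (PI * z)) / (sin (PI * z) ^ 2) ^ 2) by (field; auto).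

 set (s := sin (PI * z)) in *. set (N := (PI * z * cos (PI * z) - s) * s) in *.
 assert (0 < s ^ 2). { destruct (Rlt_or_le 0 s). nra. assert (s < 0) by (destruct H2; auto; contradiction). nra. }
 assert (0 < (s ^ 2) ^ 2) by nra.
 assert (0 <= 2 * (- N) / (s ^ 2) ^ 2) by (apply Rdiv_le_0_compat; lra).
 replace (2 * N / (s ^ 2) ^ 2) with (- (2 * (- N) / (s ^ 2) ^ 2)) by (field; lra). lra. Qed.

Lemma sin2_pos z : -1 < z < 1 -> z <> 0 -> 0 < sin (PI * z) ^ 2.
Proof. intros. pose proof (sinPI_ne z H H0). set (s := sin (PI * z)) in *.
 destruct (Rlt_or_le 0 s). nra. assert (s < 0) by (destruct H2; auto; contradiction). nra. Qed.

Lemma phi_decr a b : a <= b -> ((0 < a /\ b < 1) \/ (-1 < a /\ b < 0)) -> phi b <= phi a.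
Proof. intros Hab Hr.
 assert (Hin : forall x, a <= x <= b -> -1 < x < 1 /\ x <> 0) by (intros; destruct Hr; split; lra).
 destruct (MVT_gen phi a b (fun z => 2 * (PI * z * cos (PI * z) - sin (PI * z)) / sin (PI * z) ^ 3)) as [c [Hc E]].
 - intros x Hx. rewrite Rmin_left, Rmax_right in Hx by lra. destruct (Hin x) as [H1 H2]; [lra|].
   apply phi_derive, sinPI_ne; auto.
 - intros x Hx. rewrite Rmin_left, Rmax_right in Hx by lra. destruct (Hin x) as [H1 H2]; [lra|].
   eapply cont_of_derive. apply phi_derive, sinPI_ne; auto.
 - rewrite Rmin_left, Rmax_right in Hc by lra. destruct (Hin c) as [H1 H2]; [lra|].
   pose proof (phi_deriv_nonpos c H1 H2). assert (0 <= b - a) by lra.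
   pose proof (Rmult_le_compat_r _ _ _ H0 H). lra. Qed.

Lemma Aa_mvt a b : a <= b -> ((0 < a /\ b < 1) \/ (-1 < a /\ b < 0)) -> exists c, a <= c <= b /\ Aa b - Aa a = phi c * (b - a).
Proof. intros Hab Hr.
 assert (Hin : forall x, a <= x <= b -> -1 < x < 1 /\ x <> 0) by (intros; destruct Hr; split; lra).
 destruct (MVT_gen Aa a b phi) as [c [Hc E]].
 - intros x Hx. rewrite Rmin_left, Rmax_right in Hx by lra. destruct (Hin x) as [H1 H2]; [lra|].
   apply Aa_derive, sinPI_ne; auto.
 - intros x Hx. rewrite Rmin_left, Rmax_right in Hx by lra. destruct (Hin x) as [H1 H2]; [lra|].
   eapply cont_of_derive. apply Aa_derive, sinPI_ne; auto.
 - rewrite Rmin_left, Rmax_right in Hc by lra. exists c; auto. Qed.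

Lemma phi_nonpos b : 0 < b < 1 -> phi b <= 0.
Proof. intros Hb. pose proof (sin2_pos b ltac:(lra) ltac:(lra)). pose proof PI_RGT_0.
 assert (sin (2 * (PI * b)) <= 2 * (PI * b)) by (apply sin_le_id; nra).
 rewrite sin_2a in H1. unfold phi.
 replace (cos (PI * b) / (PI * sin (PI * b)) - b / sin (PI * b) ^ 2) with ((sin (PI * b) * cos (PI * b) - PI * b) / (PI * sin (PI * b) ^ 2)).
 2:{ field. split; [apply sinPI_ne; lra|lra]. }
 assert (0 <= (PI * b - sin (PI * b) * cos (PI * b)) / (PI * sin (PI * b) ^ 2)) by (apply Rdiv_le_0_compat; nra).
 replace ((sin (PI * b) * cos (PI * b) - PI * b) / (PI * sin (PI * b) ^ 2)) with (- ((PI * b - sin (PI * b) * cos (PI * b)) / (PI * sin (PI * b) ^ 2))) by (field; split; [apply sinPI_ne; lra|lra]).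
 lra. Qed.

Lemma phi_odd z : phi (- z) = - phi z.
Proof. unfold phi. replace (PI * - z) with (- (PI * z)) by ring. rewrite sin_neg, cos_neg.
 destruct (Req_dec (sin (PI * z)) 0) as [E|E].
 - rewrite E, Ropp_0. replace (PI * 0) with 0 by ring. replace (0 ^ 2) with 0 by ring. unfold Rdiv. rewrite Rinv_0. ring.
 - field. split; auto. apply PI_neq0. Qed.

Lemma phi_nonneg a : -1 < a < 0 -> 0 <= phi a.
Proof. intros. replace a with (- (- a)) by ring. rewrite phi_odd. pose proof (phi_nonpos (- a)). lra. Qed.

Lemma Aa_le z : -1 < z < 1 -> z <> 0 -> Aa z <= / PI ^ 2.
Proof. intros Hz Hz0. pose proof (sinPI_ne z Hz Hz0) as Hs. pose proof PI_RGT_0.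
 assert (-PI < PI * z < PI) by nra. pose proof (ucot (PI * z) H0 Hs).
 pose proof (sin2_pos z Hz Hz0).
 unfold Aa. replace (z * cos (PI * z) / (PI * sin (PI * z))) with ((PI * z * cos (PI * z) * sin (PI * z)) / sin (PI * z) ^ 2 / PI ^ 2) by (field; repeat split; try assumption; apply PI_neq0).
 assert (X : PI * z * cos (PI * z) * sin (PI * z) / sin (PI * z) ^ 2 <= 1).
 { apply (Rmult_le_reg_r (sin (PI * z) ^ 2)); auto. unfold Rdiv. rewrite Rmult_assoc, Rinv_l by lra. nra. }
 rewrite <- (Rmult_1_l (/ PI ^ 2)). unfold Rdiv at 1. apply Rmult_le_compat_r; auto. apply Rlt_le, Rinv_0_lt_compat; nra. Qed.

Lemma Aa_phi z : -1 < z < 1 -> z <> 0 -> / PI ^ 2 <= Aa z - z * phi z.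
Proof. intros Hz Hz0. pose proof (sinPI_ne z Hz Hz0) as Hs. pose proof PI_RGT_0.
 pose proof (sin2_pos z Hz Hz0). pose proof (sin_sq_le (PI * z)).
 replace (Aa z - z * phi z) with (z ^ 2 / sin (PI * z) ^ 2) by (unfold Aa, phi; field; repeat split; try assumption; apply PI_neq0).
 apply (Rmult_le_reg_r (PI ^ 2 * sin (PI * z) ^ 2)). nra.
 replace (/ PI ^ 2 * (PI ^ 2 * sin (PI * z) ^ 2)) with (sin (PI * z) ^ 2) by (field; repeat split; try assumption; try apply PI_neq0; lra).
 replace (z ^ 2 / sin (PI * z) ^ 2 * (PI ^ 2 * sin (PI * z) ^ 2)) with ((PI * z) ^ 2) by (field; repeat split; try assumption; apply PI_neq0). lra. Qed.

Lemma cell_upper a b : a < b -> -1 < a -> b < 1 -> a <> 0 -> b <> 0 -> phi b * (b - a) <= Aa b - Aa a.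
Proof. intros. destruct (Rlt_or_le 0 a); [|destruct (Rlt_or_le b 0)].
 - destruct (Aa_mvt a b) as [c [Hc E]]; try lra. rewrite E.
   apply Rmult_le_compat_r; [lra|]. apply phi_decr; lra.
 - destruct (Aa_mvt a b) as [c [Hc E]]; try lra. rewrite E.
   apply Rmult_le_compat_r; [lra|]. apply phi_decr; lra.
 - assert (a < 0) by (destruct H4; auto; contradiction). assert (0 < b) by (destruct H5; auto; subst; contradiction).
   pose proof (Aa_phi b ltac:(lra) H3). pose proof (Aa_le a ltac:(lra) H2). pose proof (phi_nonpos b ltac:(lra)).
   assert (0 <= - phi b * (- a)) by (apply Rmult_le_pos; lra). lra. Qed.

Lemma cell_lower a b : a < b -> -1 < a -> b < 1 -> a <> 0 -> b <> 0 -> Aa b - Aa a <= phi a * (b - a).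
Proof. intros. destruct (Rlt_or_le 0 a); [|destruct (Rlt_or_le b 0)].
 - destruct (Aa_mvt a b) as [c [Hc E]]; try lra. rewrite E.
   apply Rmult_le_compat_r; [lra|]. apply phi_decr; lra.
 - destruct (Aa_mvt a b) as [c [Hc E]]; try lra. rewrite E.
   apply Rmult_le_compat_r; [lra|]. apply phi_decr; lra.
 - assert (a < 0) by (destruct H4; auto; contradiction). assert (0 < b) by (destruct H5; auto; subst; contradiction).
   pose proof (Aa_phi a ltac:(lra) H2). pose proof (Aa_le b ltac:(lra) H3). pose proof (phi_nonneg a ltac:(lra)).
   assert (0 <= phi a * b) by (apply Rmult_le_pos; lra). lra. Qed.

Ltac nzt := repeat split; try lra; try apply PI_neq0; try (apply sinPI_ne; lra).

Section V.
Variable M : nat.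
Let L := LL M.
Variable y : R.
Hypothesis Hy : 0 < y < 1.
Hypothesis Hnn : forall k : nat, y - INR k / L <> 0.

Let z (k : nat) := y - INR k / L.

Lemma L_gt0 : 0 < L.
Proof. apply LL_pos. Qed.

Lemma z_range k : (k <= S M)%nat -> -1 < z k < 1.
Proof. intros Hk. unfold z. pose proof L_gt0. assert (0 <= INR k / L <= 1).
 { split. apply Rdiv_le_0_compat; [apply pos_INR|lra].
   apply (Rmult_le_reg_r L); auto. unfold Rdiv; rewrite Rmult_assoc, Rinv_l by lra. rewrite Rmult_1_r, Rmult_1_l. unfold L, LL. apply le_INR; auto. }
 lra. Qed.

Lemma z_step k : z k - z (S k) = / L.
Proof. unfold z. rewrite S_INR. field. pose proof L_gt0; lra. Qed.

Lemma z_last : z (S M) = y - 1.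
Proof. unfold z, L, LL. field. apply Rgt_not_eq, lt_0_INR; lia. Qed.

Lemma Aa_diff : Aa y - Aa (y - 1) = cos (PI * y) / (PI * sin (PI * y)).
Proof. unfold Aa. replace (PI * (y - 1)) with (PI * y - PI) by ring. rewrite sin_minus, cos_minus, sin_PI, cos_PI.
 assert (sin (PI * y) <> 0) by (apply sinPI_ne; lra). field. split; auto. apply PI_neq0. Qed.

Lemma phi_shift1 : phi (y - 1) = phi y + / sin (PI * y) ^ 2.
Proof. unfold phi. replace (PI * (y - 1)) with (PI * y - PI) by ring. rewrite sin_minus, cos_minus, sin_PI, cos_PI.
 assert (sin (PI * y) <> 0) by (apply sinPI_ne; lra). field. split; auto. apply PI_neq0. Qed.

Lemma Phi_upper : rs (S M) (fun k => phi (z k)) <= L * (cos (PI * y) / (PI * sin (PI * y))).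
Proof. pose proof L_gt0.
 assert (rs (S M) (fun k => / L * phi (z k)) <= rs (S M) (fun k => Aa (z k) - Aa (z (S k)))).
 { apply rs_le. intros k Hk. rewrite <- (z_step k). rewrite Rmult_comm.
   destruct (z_range k) as [A1 A2]; [lia|]. destruct (z_range (S k)) as [B1 B2]; [lia|].
   apply cell_upper; try lra. pose proof (z_step k). assert (0 < / L) by (apply Rinv_0_lt_compat; lra). lra.
   apply Hnn. apply Hnn. }
 rewrite rs_scal, rs_tele, z_last in H0. replace (z 0) with y in H0 by (unfold z; simpl; field; lra).
 rewrite Aa_diff in H0. apply (Rmult_le_reg_l (/ L)). apply Rinv_0_lt_compat; lra.
 replace (/ L * (L * (cos (PI * y) / (PI * sin (PI * y))))) with (cos (PI * y) / (PI * sin (PI * y))) by (field; nzt).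
 auto. Qed.

Lemma Phi_lower : L * (cos (PI * y) / (PI * sin (PI * y))) <= rs (S M) (fun k => phi (z k)) + / sin (PI * y) ^ 2.
Proof. pose proof L_gt0.
 assert (rs (S M) (fun k => Aa (z k) - Aa (z (S k))) <= rs (S M) (fun k => / L * phi (z (S k)))).
 { apply rs_le. intros k Hk. rewrite <- (z_step k). rewrite Rmult_comm.
   destruct (z_range k) as [A1 A2]; [lia|]. destruct (z_range (S k)) as [B1 B2]; [lia|].
   apply cell_lower; try lra. pose proof (z_step k). assert (0 < / L) by (apply Rinv_0_lt_compat; lra). lra.
   apply Hnn. apply Hnn. }
 rewrite rs_scal, rs_tele, z_last in H0. replace (z 0) with y in H0 by (unfold z; simpl; field; lra).
 rewrite Aa_diff in H0.
 assert (E : rs (S M) (fun k => phi (z (S k))) = rs (S M) (fun k => phi (z k)) - phi (z 0) + phi (z (S M))).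
 { pose proof (rs_shift (S M) (fun k => phi (z k))). rewrite rs_S in H1. lra. }
 rewrite E, z_last, phi_shift1 in H0. replace (z 0) with y in H0 by (unfold z; simpl; field; lra).
 apply (Rmult_le_reg_l (/ L)). apply Rinv_0_lt_compat; lra.
 replace (/ L * (L * (cos (PI * y) / (PI * sin (PI * y))))) with (cos (PI * y) / (PI * sin (PI * y))) by (field; nzt).
 lra. Qed.

Lemma sinL_shift k : sin (PI * L * (y - INR k / L)) ^ 2 = sin (PI * L * y) ^ 2.
Proof. rewrite <- (sin2_shift (PI * L * y) k). f_equal. f_equal. field. pose proof L_gt0; lra. Qed.

Lemma diff_closed : Vf M y - (y - / 2) = sin (PI * L * y) ^ 2 / L ^ 2 *
   (rs (S M) (fun k => phi (z k)) + / 2 / sin (PI * y) ^ 2 - L * (cos (PI * y) / (PI * sin (PI * y)))).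
Proof. pose proof L_gt0. rewrite identity_I. fold L.
 rewrite <- (Rmult_1_r (y - / 2)) at 1. rewrite <- (partition M y). fold L.
 set (S2 := sin (PI * L * y) ^ 2).
 assert (E1 : rs (S M) (fun k => (INR k / L - / 2) * Fk M (y - INR k / L)) + rs (S M) (fun k => Gk M (y - INR k / L))
     - (y - / 2) * rs (S M) (fun k => Fk M (y - INR k / L)) = S2 / L ^ 2 * rs (S M) (fun k => phi (z k))).
 { rewrite <- rs_scal, <- rs_plus, <- rs_scal, <- rs_minus. apply rs_ext. intros k Hk.
   assert (Hs : sin (PI * (y - INR k / L)) <> 0) by (apply sinPI_ne; [apply z_range; lia|apply Hnn]).
   rewrite Fk_closed, Gk_closed by auto. fold L. rewrite sinL_shift. fold S2. unfold phi, z. field. nzt. }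
 assert (Hs0 : sin (PI * y) <> 0) by (apply sinPI_ne; lra).
 rewrite (Fk_closed M y Hs0), (Gk_closed M y Hs0). fold L. fold S2.
 replace (rs (S M) (fun k : nat => (INR k / L - / 2) * Fk M (y - INR k / L)) + / 2 * (S2 / (L ^ 2 * sin (PI * y) ^ 2)) +
   rs (S M) (fun k : nat => Gk M (y - INR k / L)) - L * (cos (PI * y) * S2 / (PI * L ^ 2 * sin (PI * y))) -
   (y - / 2) * rs (S M) (fun k : nat => Fk M (y - INR k / L)))
  with ((rs (S M) (fun k => (INR k / L - / 2) * Fk M (y - INR k / L)) + rs (S M) (fun k => Gk M (y - INR k / L))
     - (y - / 2) * rs (S M) (fun k => Fk M (y - INR k / L))) + / 2 * (S2 / (L ^ 2 * sin (PI * y) ^ 2)) - L * (cos (PI * y) * S2 / (PI * L ^ 2 * sin (PI * y)))) by ring.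
 rewrite E1. field. nzt. Qed.

Lemma vaaler_nonnode : Rabs (y - / 2 - Vf M y) <= Kf M y.
Proof. pose proof L_gt0. assert (Hs0 : sin (PI * y) <> 0) by (apply sinPI_ne; lra).
 pose proof Phi_upper. pose proof Phi_lower. pose proof diff_closed.
 assert (Kf M y = sin (PI * L * y) ^ 2 / L ^ 2 * (/ 2 / sin (PI * y) ^ 2)).
 { unfold Kf. rewrite (Fk_closed M y Hs0). fold L. field. nzt. }
 rewrite H3. set (W := rs (S M) (fun k => phi (z k)) + / 2 / sin (PI * y) ^ 2 - L * (cos (PI * y) / (PI * sin (PI * y)))) in *.
 assert (0 <= sin (PI * L * y) ^ 2 / L ^ 2) by (apply Rdiv_le_0_compat; [apply pow2_ge_0|nra]).
 assert (W <= / 2 / sin (PI * y) ^ 2) by (unfold W; lra).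
 assert (- (/ 2 / sin (PI * y) ^ 2) <= W).
 { unfold W. replace (/ 2 / sin (PI * y) ^ 2) with (/ sin (PI * y) ^ 2 - / 2 / sin (PI * y) ^ 2) at 1 by (field; auto). lra. }
 apply Rabs_le. split.
 - replace (y - / 2 - Vf M y) with (- (Vf M y - (y - / 2))) by ring. rewrite H2.
   pose proof (Rmult_le_compat_l _ _ _ H4 H5). lra.
 - replace (y - / 2 - Vf M y) with (- (Vf M y - (y - / 2))) by ring. rewrite H2.
   pose proof (Rmult_le_compat_l _ _ _ H4 H6). lra. Qed.
End V.

Lemma sin_int_PI (m : Z) : sin (IZR m * PI) = 0.
Proof. apply sin_eq_0_1. exists m; auto. Qed.

Section N.
Variable M : nat.
Let L := LL M.

Lemma node_case (j : nat) : (1 <= j <= M)%nat -> Rabs (INR j / L - / 2 - Vf M (INR j / L)) <= Kf M (INR j / L).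
Proof. intros Hj. pose proof (LL_pos M) as HL. fold L in HL. set (y := INR j / L).
 assert (HLi : L = INR (S M)) by reflexivity.
 assert (Hzk : forall k : nat, (k <= M)%nat -> k <> j -> sin (PI * (y - INR k / L)) <> 0 /\ sin (PI * L * (y - INR k / L)) = 0).
 { intros k Hk Hkj. split.
   - apply sinPI_ne. unfold y. split.
     + apply (Rmult_lt_reg_r L); auto. replace ((INR j / L - INR k / L) * L) with (INR j - INR k) by (field; lra).
       rewrite HLi, S_INR. assert (INR k <= INR M) by (apply le_INR; lia). pose proof (pos_INR j). lra.
     + apply (Rmult_lt_reg_r L); auto. replace ((INR j / L - INR k / L) * L) with (INR j - INR k) by (field; lra).
       rewrite HLi, S_INR. assert (INR j <= INR M) by (apply le_INR; lia). pose proof (pos_INR k). lra.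
     + unfold y. intros E. apply Hkj. apply INR_eq. apply (Rmult_eq_reg_r (/ L)). lra. apply Rgt_not_eq, Rinv_0_lt_compat; lra.
   - replace (PI * L * (y - INR k / L)) with (IZR (Z.of_nat j - Z.of_nat k) * PI).
     apply sin_int_PI. unfold y. rewrite minus_IZR, <- !INR_IZR_INZ. field. lra. }
 assert (Fz : forall k : nat, (k <= M)%nat -> k <> j -> Fk M (y - INR k / L) = 0).
 { intros k Hk Hkj. destruct (Hzk k Hk Hkj) as [A B]. rewrite Fk_closed by auto. fold L. rewrite B. field. split; auto. lra. }
 assert (Gz : forall k : nat, (k <= M)%nat -> Gk M (y - INR k / L) = 0).
 { intros k Hk. destruct (Nat.eq_dec k j).
   - subst. replace (y - INR j / L) with 0 by (unfold y; ring). apply Gk_0.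
   - destruct (Hzk k Hk n) as [A B]. rewrite Gk_closed by auto. fold L. rewrite B. field. split; auto. split; auto. lra. apply PI_neq0. }
 assert (Fy : Fk M y = 0).
 { replace y with (y - INR 0 / L) by (simpl; field; lra). apply Fz; lia. }
 assert (Gy : Gk M y = 0).
 { replace y with (y - INR 0 / L) by (simpl; field; lra). apply Gz; lia. }
 assert (V : Vf M y = y - / 2).
 { rewrite identity_I. fold L. rewrite Fy, Gy.
   rewrite (rs_ext (S M) (fun k => Gk M (y - INR k / L)) (fun _ => 0)) by (intros; apply Gz; lia).
   rewrite rs_zero. rewrite (rs_single (S M) j). 
   replace (y - INR j / L) with 0 by (unfold y; ring). rewrite Fk_0. unfold y. ring. lia.
   intros k Hk Hkj. rewrite Fz by (auto; lia). ring. }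
 unfold Kf. rewrite Fy, V. replace (y - / 2 - (y - / 2)) with 0 by ring. rewrite Rabs_R0. lra. Qed.

Lemma vaaler01 y : 0 <= y < 1 -> Rabs (y - / 2 - Vf M y) <= Kf M y.
Proof. intros Hy. pose proof (LL_pos M) as HL. fold L in HL. destruct (Req_dec y 0).
 - subst. rewrite Vf_0. unfold Kf. rewrite Fk_0. replace (0 - / 2 - 0) with (- / 2) by ring.
   rewrite Rabs_Ropp, Rabs_pos_eq; lra.
 - destruct (classic (exists k : nat, y - INR k / L = 0)) as [[k Hk]|Hn].
   + assert (Ey : y = INR k / L) by lra.
     assert (1 <= k <= M)%nat.
     { split.
       - destruct k; [simpl in Ey; unfold Rdiv in Ey; rewrite Rmult_0_l in Ey; lra|lia].
       - assert (INR k < INR (S M)). { apply (Rmult_lt_reg_r (/ L)). apply Rinv_0_lt_compat; lra.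
           fold (INR k / L). rewrite <- Ey. unfold L, LL. rewrite Rinv_r. lra. apply Rgt_not_eq, lt_0_INR; lia. }
         apply INR_lt in H0. lia. }
     rewrite Ey. apply node_case; auto.
   + apply vaaler_nonnode. lra. intros k E. apply Hn. exists k; auto. Qed.
End N.

Lemma sin_shiftZ t (m : Z) : sin (t + 2 * IZR m * PI) = sin t.
Proof. destruct (Z.le_gt_cases 0 m).
 - rewrite <- (Z2Nat.id m) by auto. rewrite <- INR_IZR_INZ. apply sin_period.
 - replace m with (- Z.of_nat (Z.to_nat (- m)))%Z by lia. rewrite opp_IZR, <- INR_IZR_INZ.
   replace (t + 2 * - INR (Z.to_nat (- m)) * PI) with (t - 2 * INR (Z.to_nat (- m)) * PI) by ring. apply sin_minus_2kpi. Qed.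
Lemma cos_shiftZ t (m : Z) : cos (t + 2 * IZR m * PI) = cos t.
Proof. destruct (Z.le_gt_cases 0 m).
 - rewrite <- (Z2Nat.id m) by auto. rewrite <- INR_IZR_INZ. apply cos_period.
 - replace m with (- Z.of_nat (Z.to_nat (- m)))%Z by lia. rewrite opp_IZR, <- INR_IZR_INZ.
   replace (t + 2 * - INR (Z.to_nat (- m)) * PI) with (t - 2 * INR (Z.to_nat (- m)) * PI) by ring. apply cos_minus_2kpi. Qed.

Lemma Vf_per M y (n : Z) : Vf M (y + IZR n) = Vf M y.
Proof. unfold Vf. f_equal. apply rs_ext. intros i _. f_equal.
 replace (2 * PI * INR (S i) * (y + IZR n)) with (2 * PI * INR (S i) * y + 2 * IZR (Z.of_nat (S i) * n) * PI).
 apply sin_shiftZ. rewrite mult_IZR, <- INR_IZR_INZ. ring. Qed.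
Lemma Kf_per M y (n : Z) : Kf M (y + IZR n) = Kf M y.
Proof. unfold Kf, Fk. do 4 f_equal. apply rs_ext. intros i _. f_equal.
 replace (2 * PI * INR (S i) * (y + IZR n)) with (2 * PI * INR (S i) * y + 2 * IZR (Z.of_nat (S i) * n) * PI).
 apply cos_shiftZ. rewrite mult_IZR, <- INR_IZR_INZ. ring. Qed.

Theorem vaaler M x : Rabs (x - IZR (Int_part x) - / 2 - Vf M x) <= Kf M x.
Proof. set (n := Int_part x). set (y := x - IZR n). destruct (base_Int_part x) as [H1 H2]. fold n in H1, H2.
 replace (Vf M x) with (Vf M y) by (rewrite <- (Vf_per M y n); f_equal; unfold y; ring).
 replace (Kf M x) with (Kf M y) by (rewrite <- (Kf_per M y n); f_equal; unfold y; ring).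
 apply vaaler01. unfold y; lra. Qed.

Definition lsC (l : list Z) (f : Z -> C) : C := fold_right (fun k acc => Cplus (f k) acc) (RtoC 0) l.
Definition lsR (l : list Z) (f : Z -> R) : R := fold_right (fun k acc => f k + acc) 0 l.

Lemma Ceq (x y : C) : fst x = fst y -> snd x = snd y -> x = y.
Proof. destruct x, y; simpl; intros; subst; auto. Qed.

Lemma lsC_plus l f g : lsC l (fun k => Cplus (f k) (g k)) = Cplus (lsC l f) (lsC l g).
Proof. induction l; simpl. apply Ceq; simpl; ring. rewrite IHl. apply Ceq; simpl; ring. Qed.
Lemma lsC_scal l c f : lsC l (fun k => Cmult c (f k)) = Cmult c (lsC l f).
Proof. induction l; simpl. apply Ceq; simpl; ring. rewrite IHl. apply Ceq; simpl; ring. Qed.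
Lemma lsC_ext l f g : (forall k, In k l -> f k = g k) -> lsC l f = lsC l g.
Proof. induction l; simpl; intros H; auto. rewrite H, IHl; auto. Qed.
Lemma lsC_zero l : lsC l (fun _ => RtoC 0) = RtoC 0.
Proof. induction l; simpl; auto. rewrite IHl. apply Ceq; simpl; ring. Qed.
Lemma lsC_swap l1 l2 (f : Z -> Z -> C) : lsC l1 (fun m => lsC l2 (fun h => f m h)) = lsC l2 (fun h => lsC l1 (fun m => f m h)).
Proof. induction l1; simpl. rewrite lsC_zero; auto. rewrite IHl1, <- lsC_plus. auto. Qed.
Lemma lsR_le l f g : (forall k, In k l -> f k <= g k) -> lsR l f <= lsR l g.
Proof. induction l; simpl; intros H. lra. pose proof (H a (or_introl eq_refl)). assert (lsR l f <= lsR l g) by (apply IHl; auto). lra. Qed.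
Lemma lsR_plus l f g : lsR l (fun k => f k + g k) = lsR l f + lsR l g.
Proof. induction l; simpl. ring. rewrite IHl; ring. Qed.
Lemma lsR_scal l c f : lsR l (fun k => c * f k) = c * lsR l f.
Proof. induction l; simpl. ring. rewrite IHl; ring. Qed.
Lemma lsC_norm l f : Cmod (lsC l f) <= lsR l (fun k => Cmod (f k)).
Proof. induction l; simpl. rewrite Cmod_0; lra. eapply Rle_trans; [apply Cmod_triangle|]. lra. Qed.
Lemma lsC_R l g : lsC l (fun k => RtoC (g k)) = RtoC (lsR l g).
Proof. induction l; simpl; auto. rewrite IHl. apply Ceq; simpl; ring. Qed.
Lemma lsR_nonneg l g : (forall k, In k l -> 0 <= g k) -> 0 <= lsR l g.
Proof. induction l; simpl; intros H. lra. pose proof (H a (or_introl eq_refl)). assert (0 <= lsR l g) by (apply IHl; auto). lra. Qed.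

Lemma sumC_ls a b f : sumC a b f = lsC (Zrange a b) f.
Proof. reflexivity. Qed.
Lemma sumR_ls a b f : sumR a b f = lsR (Zrange a b) f.
Proof. reflexivity. Qed.

Lemma Zrange_nil a b : (b < a)%Z -> Zrange a b = nil.
Proof. intros. unfold Zrange. replace (Z.to_nat (b - a + 1)) with O by lia. reflexivity. Qed.

Lemma Zrange_cons a b : (a <= b)%Z -> Zrange a b = a :: Zrange (a + 1) b.
Proof. intros. unfold Zrange. replace (Z.to_nat (b - a + 1)) with (S (Z.to_nat (b - (a + 1) + 1))) by lia.
 simpl. f_equal. lia. rewrite <- seq_shift, map_map. apply map_ext. intros; lia. Qed.

Lemma Zrange_snoc a b : (a <= b + 1)%Z -> Zrange a (b + 1) = Zrange a b ++ (b + 1)%Z :: nil.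
Proof. intros. unfold Zrange. replace (Z.to_nat (b + 1 - a + 1)) with (S (Z.to_nat (b - a + 1))) by lia.
 rewrite seq_S, map_app. simpl. f_equal. f_equal. lia. Qed.

Lemma lsC_app l1 l2 f : lsC (l1 ++ l2) f = Cplus (lsC l1 f) (lsC l2 f).
Proof. induction l1; simpl. apply Ceq; simpl; ring. rewrite IHl1. apply Ceq; simpl; ring. Qed.
Lemma lsR_app l1 l2 f : lsR (l1 ++ l2) f = lsR l1 f + lsR l2 f.
Proof. induction l1; simpl. ring. rewrite IHl1. ring. Qed.

Lemma sumC_snoc a b f : (a <= b + 1)%Z -> sumC a (b + 1) f = Cplus (sumC a b f) (f (b + 1)%Z).
Proof. intros. rewrite !sumC_ls, Zrange_snoc, lsC_app by auto. simpl. apply Ceq; simpl; ring. Qed.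
Lemma sumC_empty a b f : (b < a)%Z -> sumC a b f = RtoC 0.
Proof. intros. rewrite sumC_ls, Zrange_nil; auto. Qed.

Fixpoint cs (n : nat) (f : nat -> C) : C := match n with O => RtoC 0 | S n' => Cplus (cs n' f) (f n') end.
Lemma cs_R n g : cs n (fun i => RtoC (g i)) = RtoC (rs n g).
Proof. induction n; simpl; auto. rewrite IHn. apply Ceq; simpl; ring. Qed.
Lemma cs_ext n f g : (forall i, (i < n)%nat -> f i = g i) -> cs n f = cs n g.
Proof. induction n; simpl; intros H; auto. rewrite IHn, H; auto; intros; apply H; lia. Qed.

Lemma lsC_cons a l f : lsC (a :: l) f = Cplus (f a) (lsC l f).
Proof. reflexivity. Qed.

Lemma sym_split (N : nat) (f : Z -> C) : sumC (- Z.of_nat N) (Z.of_nat N) f =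
  Cplus (f 0%Z) (cs N (fun i => Cplus (f (Z.of_nat (S i))) (f (- Z.of_nat (S i))%Z))).
Proof. induction N.
 - simpl. rewrite sumC_ls. unfold Zrange. simpl. apply Ceq; simpl; ring.
 - rewrite !sumC_ls in *. replace (Z.of_nat (S N)) with (Z.of_nat N + 1)%Z by lia.
   rewrite Zrange_snoc by lia. rewrite Zrange_cons by lia.
   replace (- (Z.of_nat N + 1) + 1)%Z with (- Z.of_nat N)%Z by lia. rewrite lsC_app, lsC_cons, lsC_cons.
   rewrite IHN. unfold lsC at 1. unfold fold_right. cbn [cs]. replace (- (Z.of_nat N + 1))%Z with (- Z.of_nat (S N))%Z by lia.
   replace (Z.of_nat N + 1)%Z with (Z.of_nat (S N)) by lia.
   destruct (f (- Z.of_nat (S N))%Z), (f (Z.of_nat (S N))), (f 0%Z), (cs N _). simpl. apply Ceq; simpl; ring. Qed.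

Lemma e_add x y : e (x + y) = Cmult (e x) (e y).
Proof. unfold e. replace (2 * PI * (x + y)) with (2 * PI * x + 2 * PI * y) by ring.
 rewrite cos_plus, sin_plus. apply Ceq; simpl; ring. Qed.
Lemma Cmod_e x : Cmod (e x) = 1.
Proof. unfold Cmod, e. simpl fst; simpl snd. rewrite <- sqrt_1. f_equal.
 pose proof (sin2_cos2 (2 * PI * x)). unfold Rsqr in H. nra. Qed.

Definition vC (M : nat) (h : Z) : C := (0, IZR (Z.sgn h) * cc M (IZR (Z.abs h)) / 2).
Definition wC (M : nat) (h : Z) : C := RtoC (/ (2 * LL M) * (1 - IZR (Z.abs h) / LL M)).

Lemma IZR_S i : IZR (Z.of_nat (S i)) = INR (S i).
Proof. rewrite INR_IZR_INZ; auto. Qed.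

Lemma e_pos i x : e (IZR (Z.of_nat (S i)) * x) = (cos (2 * PI * INR (S i) * x), sin (2 * PI * INR (S i) * x)).
Proof. unfold e. rewrite IZR_S. f_equal; f_equal; ring. Qed.
Lemma e_neg i x : e (IZR (- Z.of_nat (S i)) * x) = (cos (2 * PI * INR (S i) * x), - sin (2 * PI * INR (S i) * x)).
Proof. unfold e. rewrite opp_IZR, IZR_S. replace (2 * PI * (- INR (S i) * x)) with (- (2 * PI * INR (S i) * x)) by ring.
 rewrite cos_neg, sin_neg. auto. Qed.

Lemma Vf_C M x : RtoC (Vf M x) = sumC (- Z.of_nat M) (Z.of_nat M) (fun h => Cmult (vC M h) (e (IZR h * x))).
Proof. rewrite sym_split. unfold Vf.
 replace (- rs M (fun i => cc M (INR (S i)) * sin (2 * PI * INR (S i) * x))) with (rs M (fun i => -1 * (cc M (INR (S i)) * sin (2 * PI * INR (S i) * x)))) by (rewrite rs_scal; ring).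
 rewrite <- cs_R. 
 rewrite (cs_ext M _ (fun i => Cplus (Cmult (vC M (Z.of_nat (S i))) (e (IZR (Z.of_nat (S i)) * x))) (Cmult (vC M (- Z.of_nat (S i))) (e (IZR (- Z.of_nat (S i)) * x))))).
 - unfold vC. simpl Z.sgn. destruct (cs M _). apply Ceq; simpl; unfold Rdiv; rewrite !Rmult_0_l; ring.
 - intros i _. rewrite e_pos, e_neg. unfold vC.
   replace (Z.sgn (Z.of_nat (S i))) with 1%Z by (simpl; auto).
   replace (Z.sgn (- Z.of_nat (S i))) with (-1)%Z by (simpl; auto).
   replace (Z.abs (- Z.of_nat (S i))) with (Z.of_nat (S i)) by lia.
   replace (Z.abs (Z.of_nat (S i))) with (Z.of_nat (S i)) by lia. rewrite IZR_S.
   apply Ceq; simpl; field. Qed.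

Lemma Kf_C M x : RtoC (Kf M x) = sumC (- Z.of_nat M) (Z.of_nat M) (fun h => Cmult (wC M h) (e (IZR h * x))).
Proof. rewrite sym_split. pose proof (LL_pos M).
 assert (E : Kf M x = / (2 * LL M) + rs M (fun i => / LL M * ((1 - INR (S i) / LL M) * cos (2 * PI * INR (S i) * x)))).
 { unfold Kf, Fk. rewrite rs_scal. field. lra. }
 rewrite E, RtoC_plus, <- cs_R.
 rewrite (cs_ext M _ (fun i => Cplus (Cmult (wC M (Z.of_nat (S i))) (e (IZR (Z.of_nat (S i)) * x))) (Cmult (wC M (- Z.of_nat (S i))) (e (IZR (- Z.of_nat (S i)) * x))))).
 - f_equal. unfold wC, e. simpl Z.abs. replace (2 * PI * (0 * x)) with 0 by ring. rewrite cos_0, sin_0. apply Ceq; simpl; field; lra.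
 - intros i _. rewrite e_pos, e_neg. unfold wC.
   replace (Z.abs (- Z.of_nat (S i))) with (Z.of_nat (S i)) by lia.
   replace (Z.abs (Z.of_nat (S i))) with (Z.of_nat (S i)) by lia. rewrite IZR_S.
   apply Ceq; simpl; field; lra. Qed.

Lemma cc_bound M i : (i < M)%nat -> Rabs (cc M (INR (S i))) * (PI * INR (S i)) <= 1.
Proof. intros Hi. pose proof (LL_pos M) as HL. pose proof PI_RGT_0.
 set (h := INR (S i)). set (L := LL M).
 assert (Hh : 0 < h < L). { unfold h, L, LL. split. apply lt_0_INR; lia. apply lt_INR; lia. }
 set (u := PI * h / L).
 assert (Hu : 0 < u < PI). { unfold u. split. apply Rdiv_lt_0_compat; nra. apply (Rmult_lt_reg_r L). lra. unfold Rdiv. rewrite Rmult_assoc, Rinv_l; nra. }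
 assert (Hs : 0 < sin u) by (apply sin_gt_0; lra).
 assert (E : cc M h * (PI * h) = (1 - u / PI) * (u * cos u / sin u) + u / PI).
 { assert (Hs' : sin (PI * h / L) <> 0) by (fold u; lra).
   unfold cc. fold L. unfold u. field. repeat split; try lra; auto. }
 assert (U1 : u * cos u <= sin u) by (apply ucos; lra).
 assert (U2 : (PI - u) * cos (PI - u) <= sin (PI - u)) by (apply ucos; lra).
 rewrite sin_PI_x in U2. rewrite cos_minus, cos_PI, sin_PI in U2.
 assert (X1 : u * cos u / sin u <= 1). { apply (Rmult_le_reg_r (sin u)); auto. unfold Rdiv. rewrite Rmult_assoc, Rinv_l; lra. }
 assert (X2 : - (u / PI) <= (1 - u / PI) * (u * cos u / sin u)).
 { replace ((1 - u / PI) * (u * cos u / sin u)) with (u * ((PI - u) * cos u) / (PI * sin u)) by (field; lra).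
   apply (Rmult_le_reg_r (PI * sin u)). nra. unfold Rdiv. rewrite Rmult_assoc, Rinv_l by nra. 
   replace (- (u * / PI) * (PI * sin u)) with (- u * sin u) by (field; lra). nra. }
 assert (0 <= 1 - u / PI). { assert (u / PI < 1). apply (Rmult_lt_reg_r PI); auto. unfold Rdiv; rewrite Rmult_assoc, Rinv_l; lra. lra. }
 assert (Y : (1 - u / PI) * (u * cos u / sin u) <= (1 - u / PI) * 1) by (apply Rmult_le_compat_l; auto).
 assert (Hpos : 0 < PI * h) by nra.
 replace (Rabs (cc M h) * (PI * h)) with (Rabs (cc M h * (PI * h))) by (rewrite Rabs_mult, (Rabs_pos_eq (PI * h)); lra).
 rewrite E. apply Rabs_le. lra. Qed.


Lemma Cmod_e_diff A B : Cmod (Cminus (e A) (e B)) = 2 * Rabs (sin (PI * (A - B))).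
Proof. unfold Cmod, Cminus, Cplus, Copp, e. simpl fst; simpl snd.
 set (p := PI * (A - B)).
 assert (E : (cos (2 * PI * A) + - cos (2 * PI * B)) ^ 2 + (sin (2 * PI * A) + - sin (2 * PI * B)) ^ 2 = Rsqr (2 * sin p)).
 { pose proof (sin2_cos2 (2 * PI * A)). pose proof (sin2_cos2 (2 * PI * B)).
   pose proof (cos_minus (2 * PI * A) (2 * PI * B)). replace (2 * PI * A - 2 * PI * B) with (2 * p) in H1 by (unfold p; ring).
   rewrite cos_2a_sin in H1. unfold Rsqr in *. nra. }
 rewrite E, sqrt_Rsqr_abs, Rabs_mult, (Rabs_pos_eq 2); lra. Qed.

Lemma abs_sin_le x : Rabs (sin x) <= Rabs x.
Proof. apply Rsqr_le_abs_0. pose proof (sin_sq_le x). unfold Rsqr. simpl in H. lra. Qed.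

Lemma cc_bound' M (n : nat) : (1 <= n <= M)%nat -> Rabs (cc M (INR n)) * (PI * INR n) <= 1.
Proof. intros Hn. destruct n. lia. apply cc_bound. lia. Qed.

Lemma Cmod_vC M h : h <> 0%Z -> Cmod (vC M h) = Rabs (cc M (IZR (Z.abs h))) / 2.
Proof. intros Hh. unfold vC, Cmod. simpl fst; simpl snd.
 replace (0 ^ 2 + (IZR (Z.sgn h) * cc M (IZR (Z.abs h)) / 2) ^ 2) with (Rsqr (IZR (Z.sgn h) * cc M (IZR (Z.abs h)) / 2)) by (unfold Rsqr; ring).
 rewrite sqrt_Rsqr_abs. unfold Rdiv. rewrite !Rabs_mult. rewrite (Rabs_pos_eq (/ 2)) by lra.
 replace (Rabs (IZR (Z.sgn h))) with 1. ring.
 destruct h; simpl; try lia; unfold Rabs; destruct Rcase_abs; lra. Qed.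

Lemma coeff_bound M h alpha t : 1 <= alpha -> (1 <= Z.abs h <= Z.of_nat M)%Z -> Rabs t = IZR (Z.abs h) / alpha ->
  Cmod (vC M h) * (2 * Rabs (sin (PI * t))) <= Rmin (/ alpha) (/ IZR (Z.abs h)).
Proof. intros Ha Hh Ht. assert (h <> 0%Z) by (intro E; subst; simpl in Hh; lia). rewrite Cmod_vC by auto.
 set (n := Z.to_nat (Z.abs h)). assert (En : IZR (Z.abs h) = INR n) by (unfold n; rewrite INR_IZR_INZ, Z2Nat.id; [reflexivity|lia]).
 assert (Hn : (1 <= n <= M)%nat) by (unfold n; lia).
 rewrite En in *. pose proof (cc_bound' M n Hn). set (c := Rabs (cc M (INR n))) in *.
 assert (0 <= c) by apply Rabs_pos.
 assert (1 <= INR n) by (replace 1 with (INR 1) by auto; apply le_INR; lia).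
 pose proof PI_RGT_0. assert (3 < PI) by (pose proof PI2_3_2; lra).
 assert (S1 : Rabs (sin (PI * t)) <= 1) by (apply Rabs_le; apply SIN_bound).
 assert (S2 : Rabs (sin (PI * t)) <= PI * INR n / alpha).
 { eapply Rle_trans. apply abs_sin_le. rewrite Rabs_mult, Rabs_pos_eq by lra. rewrite Ht. unfold Rdiv; lra. }
 replace (c / 2 * (2 * Rabs (sin (PI * t)))) with (c * Rabs (sin (PI * t))) by field.
 apply Rmin_glb.
 - apply Rle_trans with (c * (PI * INR n / alpha)). apply Rmult_le_compat_l; auto.
   replace (c * (PI * INR n / alpha)) with (c * (PI * INR n) * / alpha) by (field; lra).
   rewrite <- (Rmult_1_l (/ alpha)) at 2. apply Rmult_le_compat_r; auto. apply Rlt_le, Rinv_0_lt_compat; lra.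
 - apply Rle_trans with c. rewrite <- (Rmult_1_r c) at 2. apply Rmult_le_compat_l; auto.
   apply (Rmult_le_reg_r (INR n)). lra. rewrite Rinv_l by lra. nra. Qed.

Lemma floor_spec x : IZR (floorZ x) <= x < IZR (floorZ x) + 1.
Proof. unfold floorZ. destruct (base_Int_part x). lra. Qed.
Lemma floor_unique x k : IZR k <= x < IZR k + 1 -> floorZ x = k.
Proof. intros H. pose proof (floor_spec x).
 assert (k < floorZ x + 1)%Z by (apply lt_IZR; rewrite plus_IZR; simpl; lra).
 assert (floorZ x < k + 1)%Z by (apply lt_IZR; rewrite plus_IZR; simpl; lra). lia. Qed.
Lemma floor_mono x y : x <= y -> (floorZ x <= floorZ y)%Z.
Proof. intros. pose proof (floor_spec x). pose proof (floor_spec y).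
 assert (floorZ x < floorZ y + 1)%Z by (apply lt_IZR; rewrite plus_IZR; simpl; lra). lia. Qed.

Section Count.
Variables (alpha beta : R) (f : Z -> C).
Hypothesis Ha : 1 <= alpha.

Definition Gc (m : Z) : Z := (- floorZ ((beta - IZR m - 1) / alpha) - 1)%Z.
Definition cnt (m : Z) : R := IZR (floorZ ((beta - IZR m) / alpha) - floorZ ((beta - IZR m - 1) / alpha)).
Let F (n : Z) := f (floorZ (IZR n * alpha + beta)).
Let m0 := (floorZ beta + 1)%Z.

Lemma count_ind (d : nat) : let m := (m0 - 1 + Z.of_nat d)%Z in
  (0 <= Gc m)%Z /\ sumC 1 (Gc m) F = sumC m0 m (fun k => Cmult (f k) (RtoC (cnt k))).
Proof. induction d; intros m.
 - assert (Gc m = 0%Z).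
   { unfold Gc, m, m0. replace (floorZ beta + 1 - 1 + Z.of_nat 0)%Z with (floorZ beta) by lia.
     rewrite (floor_unique _ (-1)). lia. pose proof (floor_spec beta).
     split. apply (Rmult_le_reg_r alpha). lra. unfold Rdiv; rewrite Rmult_assoc, Rinv_l by lra. lra.
     apply (Rmult_lt_reg_r alpha). lra. unfold Rdiv; rewrite Rmult_assoc, Rinv_l by lra. lra. }
   rewrite H. split. lia. rewrite !sumC_empty by (unfold m; lia). auto.
 - destruct IHd as [IH1 IH2]. set (mp := (m0 - 1 + Z.of_nat d)%Z) in *.
   assert (Em : m = (mp + 1)%Z) by (unfold m, mp; lia). rewrite Em.
   set (p := floorZ ((beta - IZR mp - 1) / alpha)). set (q := floorZ ((beta - IZR (mp + 1) - 1) / alpha)).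
   assert (Gm : Gc mp = (- p - 1)%Z) by auto.
   assert (Gm1 : Gc (mp + 1) = (- q - 1)%Z) by auto.
   assert (Cn : cnt (mp + 1) = IZR (p - q)).
   { unfold cnt. f_equal. f_equal. unfold p. f_equal. rewrite plus_IZR. simpl. f_equal. ring. }
   assert (Ex : (beta - IZR mp - 1) / alpha = (beta - IZR (mp + 1) - 1) / alpha + / alpha).
   { rewrite plus_IZR. field. lra. }
   pose proof (floor_spec ((beta - IZR mp - 1) / alpha)) as Sp. fold p in Sp.
   pose proof (floor_spec ((beta - IZR (mp + 1) - 1) / alpha)) as Sq. fold q in Sq.
   assert (Hinv : 0 < / alpha <= 1). { split. apply Rinv_0_lt_compat; lra. rewrite <- Rinv_1. apply Rinv_le_contravar; lra. }
   assert (q <= p)%Z. { unfold p, q. apply floor_mono. rewrite Ex. lra. }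
   assert (p <= q + 1)%Z. { assert (p < q + 2)%Z by (apply lt_IZR; rewrite plus_IZR; simpl; lra). lia. }
   assert (mp >= m0 - 1)%Z by (unfold mp; lia).
   destruct (Z.eq_dec p q).
   + rewrite Gm1. replace (- q - 1)%Z with (Gc mp) by lia. split. auto.
     rewrite IH2. rewrite sumC_snoc by lia. rewrite Cn. replace (p - q)%Z with 0%Z by lia.
     apply Ceq; simpl; ring.
   + assert (p = q + 1)%Z by lia. rewrite Gm1. replace (- q - 1)%Z with (Gc mp + 1)%Z by lia. split. lia.
     rewrite sumC_snoc by lia. rewrite sumC_snoc by lia. rewrite IH2. rewrite Cn. replace (p - q)%Z with 1%Z by lia.
     replace (Cmult (f (mp + 1)%Z) (RtoC (IZR 1))) with (f (mp + 1)%Z) by (apply Ceq; simpl; ring).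
     f_equal. unfold F. f_equal.
     apply floor_unique. rewrite Gm. replace (- p - 1 + 1)%Z with (- p)%Z by lia. rewrite opp_IZR, plus_IZR.
       assert (A1 : IZR p * alpha <= beta - IZR mp - 1).
       { destruct Sp as [Sp _]. apply (Rmult_le_compat_r alpha) in Sp; [|lra]. unfold Rdiv in Sp. rewrite Rmult_assoc, Rinv_l, Rmult_1_r in Sp by lra. lra. }
       assert (A2 : beta - IZR (mp + 1) - 1 < (IZR q + 1) * alpha).
       { destruct Sq as [_ Sq]. apply (Rmult_lt_compat_r alpha) in Sq; [|lra]. unfold Rdiv in Sq. rewrite Rmult_assoc, Rinv_l, Rmult_1_r in Sq by lra. lra. }
       replace (IZR q + 1) with (IZR p) in A2 by (rewrite H2, plus_IZR; simpl; ring).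
       rewrite plus_IZR in A2. simpl. split; lra. Qed.

Lemma count_final (K : R) : 0 <= K -> (forall k, Cmod (f k) <= 1) ->
  exists ex, Cmod ex <= 1 /\ sumC 1 (floorZ K) F = Cplus (sumC m0 (floorZ (beta + K * alpha)) (fun k => Cmult (f k) (RtoC (cnt k)))) ex.
Proof. intros HK Hf. set (m1 := floorZ (beta + K * alpha)).
 assert (Hm1 : (m0 - 1 <= m1)%Z). { unfold m0, m1. replace (floorZ beta + 1 - 1)%Z with (floorZ beta) by lia. apply floor_mono. nra. }
 destruct (count_ind (Z.to_nat (m1 - (m0 - 1)))) as [_ E].
 replace (m0 - 1 + Z.of_nat (Z.to_nat (m1 - (m0 - 1))))%Z with m1 in E by lia.
 rewrite <- E. set (K' := floorZ K).
 pose proof (floor_spec (beta + K * alpha)) as S1. fold m1 in S1.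
 pose proof (floor_spec K) as S2. fold K' in S2.
 assert (HK' : (0 <= K')%Z) by (unfold K'; replace 0%Z with (floorZ 0) by (apply floor_unique; simpl; lra); apply floor_mono; lra).
 set (r := (beta - IZR m1 - 1) / alpha).
 assert (R1 : r < - K). { unfold r. apply (Rmult_lt_reg_r alpha). lra. unfold Rdiv. rewrite Rmult_assoc, Rinv_l by lra. lra. }
 assert (R2 : - K - 1 <= r). { unfold r. apply (Rmult_le_reg_r alpha). lra. unfold Rdiv. rewrite Rmult_assoc, Rinv_l by lra.
   assert ((- K - 1) * alpha <= - K * alpha - 1) by nra. lra. }
 pose proof (floor_spec r) as S3.
 assert (G1 : (floorZ r < - K')%Z) by (apply lt_IZR; rewrite opp_IZR; lra).
 assert (G2 : (- K' - 3 < floorZ r)%Z) by (apply lt_IZR; rewrite minus_IZR, opp_IZR; simpl; lra).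
 assert (EG : Gc m1 = (- floorZ r - 1)%Z) by auto.
 destruct (Z.eq_dec (Gc m1) K') as [e1|e1].
 - exists (RtoC 0). split. rewrite Cmod_0; lra. rewrite e1. apply Ceq; simpl; ring.
 - assert (e2 : Gc m1 = (K' + 1)%Z) by lia. rewrite e2, sumC_snoc by lia.
   exists (Copp (F (K' + 1)%Z)). split. rewrite Cmod_opp. apply Hf.
   destruct (sumC 1 K' F), (F (K' + 1)%Z). apply Ceq; simpl; ring. Qed.
End Count.

Lemma Zrange_In a b h : In h (Zrange a b) -> (a <= h <= b)%Z.
Proof. unfold Zrange. intros Hin. apply in_map_iff in Hin. destruct Hin as [i [E Hi]]. apply in_seq in Hi. lia. Qed.

Lemma Cmod_RtoC_ge x : x <= Cmod (RtoC x).
Proof. rewrite Cmod_R. apply Rle_abs. Qed.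

Lemma lsC_opp l g : Copp (lsC l g) = lsC l (fun k => Copp (g k)).
Proof. induction l; simpl. apply Ceq; simpl; ring. rewrite <- IHl. destruct (g a), (lsC l g). apply Ceq; simpl; ring. Qed.

Section Sums.
Variable alpha : R.
Hypothesis Ha : 1 <= alpha.
Variable M : nat.
Let lh := Zrange (- Z.of_nat M) (Z.of_nat M).

Lemma Kf_sum l c : lsR l (fun m => Kf M (c - IZR m / alpha)) <=
  lsR lh (fun h => Cmod (wC M h) * Cmod (lsC l (fun m => e (- IZR m * (IZR h / alpha))))).
Proof. eapply Rle_trans. apply Cmod_RtoC_ge. rewrite <- lsC_R.
 rewrite (lsC_ext l _ (fun m => lsC lh (fun h => Cmult (wC M h) (e (IZR h * (c - IZR m / alpha)))))).
 2:{ intros m _. rewrite Kf_C. reflexivity. }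
 rewrite lsC_swap. eapply Rle_trans. apply lsC_norm. apply lsR_le. intros h _.
 rewrite (lsC_ext l _ (fun m => Cmult (Cmult (wC M h) (e (IZR h * c))) (e (- IZR m * (IZR h / alpha))))).
 2:{ intros m _. rewrite <- Cmult_assoc, <- e_add. f_equal. f_equal. field. lra. }
 rewrite lsC_scal, !Cmod_mult, Cmod_e. lra. Qed.

Lemma Vf_sum l c (f : Z -> C) :
  lsC l (fun m => Cmult (f m) (RtoC (Vf M (c - / alpha - IZR m / alpha) - Vf M (c - IZR m / alpha)))) =
  lsC lh (fun h => Cmult (Cmult (vC M h) (Cminus (e (IZR h * (c - / alpha))) (e (IZR h * c))))
                         (lsC l (fun m => Cmult (f m) (e (- IZR m * (IZR h / alpha)))))).
Proof.
 rewrite (lsC_ext l _ (fun m => lsC lh (fun h => Cmult (Cmult (vC M h) (Cminus (e (IZR h * (c - / alpha))) (e (IZR h * c)))) (Cmult (f m) (e (- IZR m * (IZR h / alpha))))))).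
 - rewrite lsC_swap. apply lsC_ext. intros h _. rewrite lsC_scal. auto.
 - intros m _. rewrite RtoC_minus, !Vf_C. unfold Cminus. rewrite !sumC_ls. fold lh.
   rewrite lsC_opp, <- lsC_plus. rewrite <- lsC_scal. apply lsC_ext. intros h _.
   assert (E1 : e (IZR h * (c - / alpha - IZR m / alpha)) = Cmult (e (IZR h * (c - / alpha))) (e (- IZR m * (IZR h / alpha)))).
   { rewrite <- e_add. f_equal. field. lra. }
   assert (E2 : e (IZR h * (c - IZR m / alpha)) = Cmult (e (IZR h * c)) (e (- IZR m * (IZR h / alpha)))).
   { rewrite <- e_add. f_equal. field. lra. }
   rewrite E1, E2. destruct (vC M h), (e (IZR h * (c - / alpha))), (e (IZR h * c)), (e (- IZR m * (IZR h / alpha))), (f m).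
   apply Ceq; simpl; ring. Qed.
End Sums.

Lemma lsC_minus l g1 g2 : Cminus (lsC l g1) (lsC l g2) = lsC l (fun k => Cminus (g1 k) (g2 k)).
Proof. induction l; simpl. apply Ceq; simpl; ring. rewrite <- IHl. destruct (g1 a), (g2 a), (lsC l g1), (lsC l g2). apply Ceq; simpl; ring. Qed.

Theorem proposition5 :
  exists C0 : R,
  forall (phi : nat -> C), (forall m : nat, Cmod (phi m) <= 1) ->
  forall alpha beta K H : R,
    1 <= alpha -> 0 <= beta -> 0 <= K -> 1 <= H ->
    Cmod (Cminus
      (sumC 1 (floorZ K)
         (fun n => phi (Z.to_nat (floorZ (IZR n * alpha + beta)))))
      (Cmult (RtoC (/ alpha))
         (sumC (floorZ beta + 1) (floorZ (beta + K * alpha))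
            (fun m => phi (Z.to_nat m)))))
    <=
    sumR (- floorZ H) (floorZ H)
      (fun h => if Z.eqb h 0 then 0 else
         Rmin (/ alpha) (/ IZR (Z.abs h)) *
         Cmod (sumC (floorZ beta + 1) (floorZ (beta + K * alpha))
            (fun m => Cmult (phi (Z.to_nat m)) (e (- IZR m * (IZR h / alpha))))))
    + / H * sumR (- floorZ H) (floorZ H)
      (fun h =>
         Cmod (sumC (floorZ beta + 1) (floorZ (beta + K * alpha))
            (fun m => e (- IZR m * (IZR h / alpha)))))
    + C0.
Proof.
 exists 1. intros phi Hphi alpha beta K H Ha Hb HK HH.
 pose (f := fun m : Z => phi (Z.to_nat m)).
 assert (Hf : forall k, Cmod (f k) <= 1) by (intros; apply Hphi).
 destruct (count_final alpha beta f Ha K HK Hf) as [ex [Hex Ecount]].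
 change (fun n : Z => phi (Z.to_nat (floorZ (IZR n * alpha + beta)))) with (fun n => f (floorZ (IZR n * alpha + beta))).
 rewrite Ecount.
 change (fun m : Z => phi (Z.to_nat m)) with f.
 assert (H1 : (1 <= floorZ H)%Z) by (replace 1%Z with (floorZ 1) by (apply floor_unique; lra); apply floor_mono; lra).
 set (M := Z.to_nat (floorZ H)). assert (EM : floorZ H = Z.of_nat M) by (unfold M; lia).
 assert (HLH : H <= LL M).
 { unfold LL. rewrite S_INR, INR_IZR_INZ, <- EM. pose proof (floor_spec H). lra. }
 rewrite EM.
 set (m0 := (floorZ beta + 1)%Z). set (m1 := floorZ (beta + K * alpha)).
 set (c := beta / alpha).
 set (Ef := fun x => x - IZR (floorZ x) - / 2 - Vf M x).
 set (Vd := fun m : Z => Vf M (c - / alpha - IZR m / alpha) - Vf M (c - IZR m / alpha)).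
 set (Ed := fun m : Z => Ef (c - / alpha - IZR m / alpha) - Ef (c - IZR m / alpha)).
 assert (Pt : forall m : Z, cnt alpha beta m = / alpha + Vd m + Ed m).
 { intros m. unfold cnt, Vd, Ed, Ef. replace ((beta - IZR m) / alpha) with (c - IZR m / alpha) by (unfold c; field; lra).
   replace ((beta - IZR m - 1) / alpha) with (c - / alpha - IZR m / alpha) by (unfold c; field; lra).
   rewrite minus_IZR. ring. }
 set (lm := Zrange m0 m1).
 set (T1 := lsC lm (fun m => Cmult (f m) (RtoC (Vd m)))).
 set (T2 := lsC lm (fun m => Cmult (f m) (RtoC (Ed m)))).
 assert (Dec : Cminus (Cplus (sumC m0 m1 (fun k => Cmult (f k) (RtoC (cnt alpha beta k)))) ex) (Cmult (RtoC (/ alpha)) (sumC m0 m1 f)) = Cplus (Cplus T1 T2) ex).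
 { rewrite !sumC_ls. fold lm. rewrite <- lsC_scal.
   replace (Cminus (Cplus (lsC lm (fun k => Cmult (f k) (RtoC (cnt alpha beta k)))) ex) (lsC lm (fun k => Cmult (RtoC (/ alpha)) (f k))))
     with (Cplus (Cminus (lsC lm (fun k => Cmult (f k) (RtoC (cnt alpha beta k)))) (lsC lm (fun k => Cmult (RtoC (/ alpha)) (f k)))) ex)
     by (destruct (lsC lm _), (lsC lm _), ex; apply Ceq; simpl; ring).
   f_equal. rewrite lsC_minus. unfold T1, T2. rewrite <- lsC_plus. apply lsC_ext. intros k _.
   rewrite Pt. destruct (f k). apply Ceq; simpl; ring. }
 rewrite Dec.
 assert (Hlh : forall h, In h (Zrange (- Z.of_nat M) (Z.of_nat M)) -> 0 <= IZR (Z.abs h) <= LL M - 1).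
 { intros h Hh. apply Zrange_In in Hh. unfold LL. rewrite S_INR, INR_IZR_INZ. split. apply IZR_le; lia. 
   assert (IZR (Z.abs h) <= IZR (Z.of_nat M)) by (apply IZR_le; lia). lra. }
 assert (B2 : Cmod T2 <= / H * sumR (- Z.of_nat M) (Z.of_nat M) (fun h => Cmod (sumC m0 m1 (fun m => e (- IZR m * (IZR h / alpha)))))).
 { eapply Rle_trans. apply lsC_norm.
   apply Rle_trans with (lsR lm (fun m => Kf M (c - / alpha - IZR m / alpha) + Kf M (c - IZR m / alpha))).
   { apply lsR_le. intros m _. rewrite Cmod_mult, Cmod_R.
     pose proof (vaaler M (c - / alpha - IZR m / alpha)) as V1. pose proof (vaaler M (c - IZR m / alpha)) as V2.
     assert (Rabs (Ed m) <= Kf M (c - / alpha - IZR m / alpha) + Kf M (c - IZR m / alpha)).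
     { unfold Ed, Ef. unfold floorZ. eapply Rle_trans. apply Rabs_triang. rewrite Rabs_Ropp. lra. }
     pose proof (Hf m). pose proof (Rabs_pos (Ed m)). pose proof (Cmod_ge_0 (f m)). nra. }
   rewrite lsR_plus. eapply Rle_trans. apply Rplus_le_compat; apply Kf_sum; auto.
   rewrite <- lsR_plus, sumR_ls, <- lsR_scal. apply lsR_le. intros h Hh.
   rewrite sumC_ls. fold lm.
   assert (W : 2 * Cmod (wC M h) <= / H).
   { destruct (Hlh h Hh) as [A1 A2]. pose proof (LL_pos M). unfold wC. rewrite Cmod_R.
     assert (0 <= 1 - IZR (Z.abs h) / LL M <= 1). { split. apply (Rmult_le_reg_r (LL M)); auto. unfold Rdiv. rewrite Rmult_minus_distr_r, Rmult_assoc, Rinv_l by lra. lra.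
        assert (0 <= IZR (Z.abs h) / LL M) by (apply Rdiv_le_0_compat; lra). lra. }
     rewrite Rabs_pos_eq. 2:{ apply Rmult_le_pos; [apply Rlt_le, Rinv_0_lt_compat; lra|lra]. }
     apply Rle_trans with (/ LL M). replace (2 * (/ (2 * LL M) * (1 - IZR (Z.abs h) / LL M))) with (/ LL M * (1 - IZR (Z.abs h) / LL M)) by (field; lra).
     rewrite <- (Rmult_1_r (/ LL M)) at 2. apply Rmult_le_compat_l. apply Rlt_le, Rinv_0_lt_compat; lra. lra.
     apply Rinv_le_contravar; lra. }
   pose proof (Cmod_ge_0 (lsC lm (fun m => e (- IZR m * (IZR h / alpha))))). nra. }
 assert (B1 : Cmod T1 <= sumR (- Z.of_nat M) (Z.of_nat M) (fun h => if Z.eqb h 0 then 0 else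
         Rmin (/ alpha) (/ IZR (Z.abs h)) * Cmod (sumC m0 m1 (fun m => Cmult (f m) (e (- IZR m * (IZR h / alpha))))))).
 { unfold T1, Vd. rewrite (Vf_sum alpha Ha M lm c f). eapply Rle_trans. apply lsC_norm. rewrite sumR_ls. apply lsR_le. intros h Hh.
   apply Zrange_In in Hh. rewrite !Cmod_mult. rewrite sumC_ls. fold lm.
   destruct (Z.eqb_spec h 0) as [E0|E0].
   - subst h. replace (Cmod (vC M 0)) with 0. lra.
     unfold vC, Cmod. simpl fst; simpl snd. replace (0 ^ 2 + (0 * cc M 0 / 2) ^ 2) with 0 by field. rewrite sqrt_0; auto.
   - apply Rmult_le_compat_r. apply Cmod_ge_0. rewrite Cmod_e_diff. apply coeff_bound; auto.
     + split. destruct h; simpl; lia. destruct h; simpl; lia.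
     + rewrite abs_IZR. replace (IZR h * (c - / alpha) - IZR h * c) with (- (IZR h / alpha)) by (field; lra).
       rewrite Rabs_Ropp. unfold Rdiv. rewrite Rabs_mult, (Rabs_pos_eq (/ alpha)); auto. apply Rlt_le, Rinv_0_lt_compat; lra. }
 pose proof (Cmod_triangle (Cplus T1 T2) ex). pose proof (Cmod_triangle T1 T2).
 unfold f in B1. lra.
Qed.
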